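(* Let $0<\alpha<1$, $T>0$, $y\in C^2[0,T]$, and $x\in(0,T]$. For an integer $N\ge 2$ put $h=T/N$ and suppose $n=x/h$ is an integer; write $y_j=y(jh)$. Define $\bar\sigma_0^{(\alpha)}=1/\Gamma(2-\alpha)$, $$\bar\sigma_k^{(\alpha)}=\begin{cases}\dfrac{(k-1)^{1-\alpha}-2k^{1-\alpha}+(k+1)^{1-\alpha}}{\Gamma(2-\alpha)}, & 1\le k\le\lceil N/5\rceil,\\[6pt] \dfrac{1}{\Gamma(-\alpha)k^{1+\alpha}}+\dfrac{\alpha}{12\,\Gamma(-2-\alpha)k^{3+\alpha}}, & \lceil N/5\rceil<k\le n-1,\end{cases}$$ $$\bar\sigma_n^{(\alpha)}=\begin{cases}\dfrac{(n-1)^{1-\alpha}-n^{1-\alpha}}{\Gamma(2-\alpha)}, & n\le\lceil N/5\rceil,\\[6pt] -\dfrac{n^{-\alpha}}{\Gamma(1-\alpha)}+\dfrac{n^{-\alpha-1}}{2\Gamma(-\alpha)}-\dfrac{n^{-\alpha-2}}{6\Gamma(-1-\alpha)}, & n>\lceil N/5\rceil.\end{cases}$$ Then, as $h\to0$ (over those $N$ for which $x/h$ is an integer), $$\frac{1}{h^\alpha}\sum_{k=0}^n\bar\sigma_k^{(\alpha)}y_{n-k}=y^{(\alpha)}(x)+O(h^{2-\alpha}).$$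
   Context: For $0<\alpha<1$ the Caputo derivative is $y^{(\alpha)}(x)=\frac{1}{\Gamma(1-\alpha)}\int_0^x \frac{y'(t)}{(x-t)^\alpha}\,dt$. $\Gamma$ is the Euler gamma function (analytically continued to negative non-integers); $\lceil\cdot\rceil$ is the ceiling function. *)

(* Defs.v *)
From Stdlib Require Import Reals Lra Lia ClassicalEpsilon Factorial.
Open Scope R_scope.

(* Real power with the convention 0^a = 0 (used only for a > 0 at base 0);
   for x > 0 it is the usual x^a = exp(a ln x). *)
Definition rpow (x a : R) : R :=
  if Rle_dec x 0 then 0 else Rpower x a.

Definition gauss_seq (z : R) (n : nat) : R :=
  INR (fact n) * Rpower (INR n) z / prod_f_R0 (fun k => z + INR k) n.

(* Euler Gamma function, valid (and analytically continued) at every z that is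
   not a non-positive integer, via Gauss' limit formula
   Gamma(z) = lim_{n->oo} n! n^z / (z(z+1)...(z+n)). *)
Definition Gamma (z : R) : R :=
  epsilon (inhabits 0) (fun g => Un_cv (gauss_seq z) g).

Definition improper_int_right (f : R -> R) (a b I : R) : Prop :=
  forall eps, 0 < eps -> exists delta, 0 < delta /\
    forall c, a <= c -> b - delta < c < b ->
      exists pr : Riemann_integrable f a c, Rabs (RiemannInt pr - I) < eps.

(* Caputo derivative of order alpha at x, given y' = y1:
   (1/Gamma(1-alpha)) int_0^x y1(t)/(x-t)^alpha dt. *)
Definition is_caputo (y1 : R -> R) (alpha x v : R) : Prop :=
  exists I, improper_int_right (fun t => y1 t / rpow (x - t) alpha) 0 x I
            /\ v = I / Gamma (1 - alpha).

Definition ceil5 (N : nat) : nat := Nat.div (N + 4) 5.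

Definition sigma_bar (alpha : R) (N n k : nat) : R :=
  if Nat.eqb k 0 then 1 / Gamma (2 - alpha)
  else if Nat.ltb k n then
    (if Nat.leb k (ceil5 N) then
       (rpow (INR k - 1) (1 - alpha) - 2 * rpow (INR k) (1 - alpha)
        + rpow (INR k + 1) (1 - alpha)) / Gamma (2 - alpha)
     else
       1 / (Gamma (- alpha) * rpow (INR k) (1 + alpha))
       + alpha / (12 * Gamma (-2 - alpha) * rpow (INR k) (3 + alpha)))
  else
    (if Nat.leb n (ceil5 N) then
       (rpow (INR n - 1) (1 - alpha) - rpow (INR n) (1 - alpha)) / Gamma (2 - alpha)
     else
       - rpow (INR n) (- alpha) / Gamma (1 - alpha)
       + rpow (INR n) (- alpha - 1) / (2 * Gamma (- alpha))
       - rpow (INR n) (- alpha - 2) / (6 * Gamma (-1 - alpha))).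

(* Main.v *)
Require Import Defs.
From Stdlib Require Import Reals Lra Lia ClassicalEpsilon Factorial.
From Coquelicot Require Import Coquelicot.
Open Scope R_scope.

Lemma gamma_eq z L : Un_cv (gauss_seq z) L -> Gamma z = L.
Proof.
  intro H. unfold Gamma.
  assert (E := epsilon_spec (inhabits 0) (fun g => Un_cv (gauss_seq z) g) (ex_intro _ L H)).
  simpl in E. eapply UL_sequence; eauto.
Qed.

Lemma prodS (f : nat -> R) n : prod_f_R0 f (S n) = prod_f_R0 f n * f (S n).
Proof. reflexivity. Qed.

Lemma prod_shift z n : prod_f_R0 (fun k => z + 1 + INR k) n * z
   = prod_f_R0 (fun k => z + INR k) n * (z + INR n + 1).
Proof.
  induction n.
  - simpl. ring.
  - rewrite !prodS, S_INR.
    replace (prod_f_R0 (fun k : nat => z + 1 + INR k) n * (z + 1 + (INR n + 1)) * z)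
      with (prod_f_R0 (fun k : nat => z + 1 + INR k) n * z * (z + 1 + (INR n + 1))) by ring.
    rewrite IHn. ring.
Qed.

Lemma prod_nz (f : nat -> R) n : (forall k, f k <> 0) -> prod_f_R0 f n <> 0.
Proof.
  intro H. induction n; simpl; auto.
Qed.

Lemma gauss_up z n : (1 <= n)%nat -> z <> 0 -> z + INR n + 1 <> 0 ->
  prod_f_R0 (fun k => z + INR k) n <> 0 ->
  gauss_seq (z+1) n = gauss_seq z n * (z * INR n / (z + INR n + 1)).
Proof.
  intros Hn Hz Hz1 HP.
  assert (HP1 : prod_f_R0 (fun k => z + 1 + INR k) n =
     prod_f_R0 (fun k => z + INR k) n * (z + INR n + 1) / z).
  { rewrite <- prod_shift. field. auto. }
  unfold gauss_seq. rewrite Rpower_plus, Rpower_1.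
  2:{ apply lt_0_INR; lia. }
  replace (fun k : nat => z + 1 + INR k) with (fun k : nat => z + 1 + INR k) by reflexivity.
  rewrite HP1. field. repeat split; auto.
Qed.

Lemma cv_c_div c d : Un_cv (fun n => c / (d + INR n)) 0.
Proof.
  intros eps Heps.
  destruct (archimed ((Rabs c) / eps + Rabs d)) as [Ha _].
  destruct (INR_unbounded ((Rabs c)/eps + Rabs d + 1)) as [N0 HN0].
  exists N0. intros n Hn. unfold Rdist.
  assert (HnN : INR N0 <= INR n) by (apply le_INR; lia).
  assert (Hc : 0 <= Rabs c / eps) by (apply Rmult_le_pos; [apply Rabs_pos|left; apply Rinv_0_lt_compat; lra]).
  assert (Hd: Rabs c / eps + 1 < d + INR n) by (pose proof (Rle_abs (-d)); rewrite Rabs_Ropp in *; lra).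
  rewrite Rminus_0_r. unfold Rdiv. rewrite Rabs_mult, Rabs_inv, (Rabs_pos_eq (d + INR n)) by lra.
  apply (Rmult_lt_reg_r (d + INR n)); [lra|].
  rewrite Rmult_assoc, Rinv_l, Rmult_1_r by lra.
  assert (Rabs c < eps * (Rabs c / eps + 1)).
  { unfold Rdiv. rewrite Rmult_plus_distr_l, <- Rmult_assoc, (Rmult_comm eps), Rmult_assoc, Rinv_r by lra. lra. }
  apply Rlt_le_trans with (1 := H). apply Rmult_le_compat_l; lra.
Qed.

Lemma cv_const c : Un_cv (fun _ => c) c.
Proof. intros e He; exists 0%nat; intros; unfold Rdist; rewrite Rminus_diag, Rabs_R0; lra. Qed.

Lemma Un_cv_ev (u v : nat -> R) L m : (forall n, (m <= n)%nat -> u n = v n) -> Un_cv u L -> Un_cv v L.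
Proof.
  intros He H eps Heps. destruct (H eps Heps) as [N0 HN]. exists (max N0 m).
  intros n Hn. rewrite <- He by lia. apply HN. lia.
Qed.

Lemma cv_up z L : z <> 0 -> (forall k, z + INR k <> 0) ->
  Un_cv (gauss_seq z) L -> Un_cv (gauss_seq (z+1)) (L * z).
Proof.
  intros Hz Hk H.
  apply Un_cv_ev with (u := fun n => gauss_seq z n * (z - (z * (z+1)) / ((z+1) + INR n))) (m := 1%nat).
  - intros n Hn. rewrite gauss_up; auto.
    + f_equal. specialize (Hk (S n)). rewrite S_INR in Hk. field. lra.
    + specialize (Hk (S n)). rewrite S_INR in Hk. lra.
    + apply prod_nz. auto.
  - apply CV_mult; auto.
    assert (H1 := CV_minus (fun _ => z) _ z 0 (cv_const z) (cv_c_div (z*(z+1)) (z+1))).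
    rewrite Rminus_0_r in H1. exact H1.
Qed.

Lemma cv_down z L : z <> 0 -> (forall k, z + INR k <> 0) ->
  Un_cv (gauss_seq (z+1)) L -> Un_cv (gauss_seq z) (L * / z).
Proof.
  intros Hz Hk H.
  apply Un_cv_ev with (u := fun n => gauss_seq (z+1) n * (/ z + ((z+1)/z) / (0 + INR n))) (m := 1%nat).
  - intros n Hn. rewrite gauss_up; auto.
    + assert (0 < INR n) by (apply lt_0_INR; lia).
      specialize (Hk (S n)). rewrite S_INR in Hk. field. repeat split; lra.
    + specialize (Hk (S n)). rewrite S_INR in Hk. lra.
    + apply prod_nz. auto.
  - apply CV_mult; auto.
    assert (H1 := CV_plus (fun _ => / z) _ (/ z) 0 (cv_const (/ z)) (cv_c_div ((z+1)/z) 0)).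
    rewrite Rplus_0_r in H1. exact H1.
Qed.

Lemma Rpower_1_base y : Rpower 1 y = 1.
Proof. unfold Rpower. rewrite ln_1, Rmult_0_r. apply exp_0. Qed.

Lemma Rpower_pos x y : 0 < Rpower x y.
Proof. unfold Rpower. apply exp_pos. Qed.

Lemma bernoulli z u : 0 < z < 1 -> 0 < u -> Rpower u z <= 1 + z * (u - 1).
Proof.
  intros Hz Hu.
  destruct (Rtotal_order u 1) as [Hlt|[Heq|Hgt]].
  - destruct (MVT_cor2 (fun t => Rpower t z) (fun t => z * Rpower t (z-1)) u 1 Hlt)
      as [c [Hc1 Hc2]].
    { intros c Hc. apply derivable_pt_lim_power. lra. }
    rewrite Rpower_1_base in Hc1.
    assert (1 < Rpower c (z-1)).
    { replace (z-1) with (-(1-z)) by ring. rewrite Rpower_Ropp.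
      assert (Rpower c (1-z) < 1).
      { assert (Rpower c (1-z) < Rpower 1 (1-z)) by (apply Rlt_Rpower_l; lra).
        rewrite Rpower_1_base in H; exact H. }
      pose proof (Rpower_pos c (1-z)).
      replace 1 with (/1) at 1 by apply Rinv_1. apply Rinv_lt_contravar; lra. }
    assert (z * 1 * (1 - u) <= z * Rpower c (z - 1) * (1 - u)).
    { apply Rmult_le_compat_r; [lra|]. apply Rmult_le_compat_l; lra. }
    nra.
  - subst. rewrite Rpower_1_base. lra.
  - destruct (MVT_cor2 (fun t => Rpower t z) (fun t => z * Rpower t (z-1)) 1 u Hgt)
      as [c [Hc1 Hc2]].
    { intros c Hc. apply derivable_pt_lim_power. lra. }
    rewrite Rpower_1_base in Hc1.
    assert (Rpower c (z-1) < 1).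
    { assert (Rpower c (z-1) < Rpower c 0) by (apply Rpower_lt; lra).
      rewrite Rpower_O in H by lra; exact H. }
    assert (z * Rpower c (z - 1) * (u - 1) <= z * 1 * (u-1)).
    { apply Rmult_le_compat_r; [lra|]. apply Rmult_le_compat_l; lra. }
    nra.
Qed.

Lemma prod_pos (f : nat -> R) n : (forall k, 0 < f k) -> 0 < prod_f_R0 f n.
Proof. intro H. induction n; simpl; auto. apply Rmult_lt_0_compat; auto. Qed.

Lemma gauss_S z n : gauss_seq z (S n) =
  INR (fact n) * INR (S n) * Rpower (INR (S n)) z / (prod_f_R0 (fun k => z + INR k) n * (z + INR (S n))).
Proof.
  unfold gauss_seq. rewrite prodS. f_equal. f_equal. rewrite fact_simpl, mult_INR. ring.
Qed.

Lemma gauss_conv z : 0 < z < 1 -> exists L, Un_cv (gauss_seq z) L.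
Proof.
  intros Hz.
  set (P := fun n => prod_f_R0 (fun k => z + INR k) n).
  assert (HP : forall n, 0 < P n) by (intro n; apply prod_pos; intro k; pose proof (pos_INR k); lra).
  set (w := fun n => INR (fact n) * Rpower (INR (S n)) z / P n).
  assert (Hw : forall n, w n <= / z).
  { induction n.
    - unfold w, P. simpl. rewrite Rpower_1_base. right; field; lra.
    - eapply Rle_trans; [|exact IHn].
      pose proof (HP n). pose proof (pos_INR n).
      pose proof (lt_0_INR (fact n) (lt_O_fact n)).
      assert (E1 : INR (S (S n)) = INR (S n) * (INR (S (S n)) / INR (S n))) by (field; rewrite S_INR; lra).
      assert (Hpos : 0 < Rpower (INR (S n)) z) by apply Rpower_pos.
      assert (E : w (S n) = w n * (INR (S n) * Rpower (INR (S (S n)) / INR (S n)) z / (z + INR (S n)))).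
      { unfold w. rewrite fact_simpl, mult_INR.
        change (P (S n)) with (P n * (z + INR (S n))).
        rewrite E1 at 1. rewrite <- Rpower_mult_distr.
        2:{ rewrite S_INR; lra. }
        2:{ rewrite !S_INR. apply Rdiv_lt_0_compat; lra. }
        field. rewrite S_INR. lra. }
      rewrite E.
      assert (B := bernoulli z (INR (S (S n)) / INR (S n)) Hz).
      rewrite !S_INR in *.
      assert (0 < (INR n + 1 + 1) / (INR n + 1)) by (apply Rdiv_lt_0_compat; lra).
      specialize (B H2).
      replace ((INR n + 1 + 1) / (INR n + 1) - 1) with (/ (INR n + 1)) in B by (field; lra).
      assert (0 <= w n) by (unfold w; apply Rmult_le_pos; [apply Rmult_le_pos; [lra|left; apply Rpower_pos]|left; apply Rinv_0_lt_compat; lra]).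
      rewrite <- (Rmult_1_r (w n)) at 2. apply Rmult_le_compat_l; [lra|].
      apply (Rmult_le_reg_r (z + (INR n + 1))); [lra|].
      unfold Rdiv. rewrite Rmult_assoc, Rinv_l, Rmult_1_r by lra.
      assert ((INR n + 1) * Rpower ((INR n + 1 + 1) / (INR n + 1)) z <= (INR n + 1) * (1 + z * / (INR n + 1))).
      { apply Rmult_le_compat_l; lra. }
      replace ((INR n + 1) * (1 + z * / (INR n + 1))) with (z + (INR n + 1)) in H4 by (field; lra).
      lra. }
  assert (Hu : forall n, gauss_seq z n <= w n).
  { intro n. unfold gauss_seq, w. fold (P n). unfold Rdiv.
    pose proof (HP n). pose proof (lt_0_INR (fact n) (lt_O_fact n)).
    apply Rmult_le_compat_r; [left; apply Rinv_0_lt_compat; lra|].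
    apply Rmult_le_compat_l; [lra|].
    destruct n.
    - simpl. rewrite Rpower_1_base. unfold Rpower. replace (ln 0) with 0.
      { rewrite Rmult_0_r, exp_0; lra. }
      unfold ln. destruct (Rlt_dec 0 0) as [r|r]; [exfalso; lra|reflexivity].
    - apply Rle_Rpower_l; [lra|]. rewrite !S_INR. pose proof (pos_INR n); lra. }
  assert (Hmono : forall m, (1 <= m)%nat -> gauss_seq z m <= gauss_seq z (S m)).
  { intros m Hm.
    assert (Hm0 : 0 < INR m) by (apply lt_0_INR; lia).
    pose proof (HP m). pose proof (lt_0_INR (fact m) (lt_O_fact m)).
    assert (E1 : INR m = INR (S m) * (INR m / INR (S m))) by (field; rewrite S_INR; lra).
    assert (E : gauss_seq z (S m) = gauss_seq z m *
        (INR (S m) / ((Rpower (INR m / INR (S m)) z) * (z + INR (S m))))).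
    { rewrite gauss_S. unfold gauss_seq. fold (P m).
      rewrite E1 at 1. rewrite <- Rpower_mult_distr.
      2:{ rewrite S_INR; lra. }
      2:{ rewrite !S_INR. apply Rdiv_lt_0_compat; lra. }
      pose proof (Rpower_pos (INR (S m)) z). pose proof (Rpower_pos (INR m / INR (S m)) z).
      field. rewrite S_INR in *. repeat split; lra. }
    rewrite E.
    assert (0 <= gauss_seq z m).
    { unfold gauss_seq. apply Rmult_le_pos; [apply Rmult_le_pos; [lra|left; apply Rpower_pos]|left; apply Rinv_0_lt_compat; apply HP]. }
    rewrite <- (Rmult_1_r (gauss_seq z m)) at 1. apply Rmult_le_compat_l; [lra|].
    assert (B := bernoulli z (INR m / INR (S m)) Hz).
    rewrite !S_INR in *.
    assert (0 < INR m / (INR m + 1)) by (apply Rdiv_lt_0_compat; lra).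
    specialize (B H2).
    replace (INR m / (INR m + 1) - 1) with (- / (INR m + 1)) in B by (field; lra).
    pose proof (Rpower_pos (INR m / (INR m + 1)) z).
    assert (Rpower (INR m / (INR m + 1)) z * (z + (INR m + 1)) <= INR m + 1).
    { apply Rle_trans with ((1 + z * - / (INR m + 1)) * (z + (INR m + 1))).
      - apply Rmult_le_compat_r; lra.
      - replace ((1 + z * - / (INR m + 1)) * (z + (INR m + 1))) with (INR m + 1 - z * z / (INR m + 1)) by (field; lra).
        assert (0 <= z * z / (INR m + 1)) by (apply Rmult_le_pos; [nra|left; apply Rinv_0_lt_compat; lra]).
        lra. }
    apply (Rmult_le_reg_r (Rpower (INR m / (INR m + 1)) z * (z + (INR m + 1)))); [nra|].
    unfold Rdiv at 2. rewrite Rmult_assoc, Rinv_l, Rmult_1_r by nra. lra. }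
  destruct (growing_cv (fun n => gauss_seq z (S n))) as [L HL].
  - intro n. apply Hmono. lia.
  - exists (/ z). intros r [i ->]. eapply Rle_trans; [apply Hu|apply Hw].
  - exists L. intros eps Heps. destruct (HL eps Heps) as [N0 HN0]. exists (S N0).
    intros n Hn. destruct n; [lia|]. apply HN0. lia.
Qed.

Lemma gamma_facts a : 0 < a < 1 ->
  Gamma (2 - a) = (1 - a) * Gamma (1 - a) /\ Gamma (1 - a) = - a * Gamma (- a).
Proof.
  intros Ha.
  destruct (gauss_conv (1 - a)) as [L HL]; [lra|].
  assert (H2 := cv_up (1 - a) L ltac:(lra) ltac:(intro k; pose proof (pos_INR k); lra) HL).
  assert (H0 := cv_down (- a) L ltac:(lra) ltac:(intro k; intro Hk; destruct k; [simpl in Hk; lra|];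
      rewrite S_INR in Hk; pose proof (pos_INR k); lra)
      ltac:(replace (- a + 1) with (1 - a) by ring; exact HL)).
  replace (1 - a + 1) with (2 - a) in H2 by ring.
  rewrite (gamma_eq _ _ H2), (gamma_eq _ _ H0), (gamma_eq _ _ HL). split; [ring|field; lra].
Qed.

Lemma Rpower_pos' x y : 0 < Rpower x y.
Proof. unfold Rpower. apply exp_pos. Qed.

Lemma Rpow_derive v p : 0 < v -> is_derive (fun x => Rpower x p) v (p * Rpower v (p-1)).
Proof. intro H. apply is_derive_Reals. apply derivable_pt_lim_power. exact H. Qed.

Lemma Rpow_ex v p : 0 < v -> ex_derive (fun x => Rpower x p) v.
Proof. intro H. eexists. apply Rpow_derive. exact H. Qed.

Lemma Rpow_Derive v p : 0 < v -> Derive (fun x => Rpower x p) v = p * Rpower v (p-1).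
Proof. intro H. apply is_derive_unique. apply Rpow_derive. exact H. Qed.

Lemma cmp (phi psi dphi dpsi : R -> R) a b : a <= b ->
  (forall t, a <= t <= b -> is_derive phi t (dphi t)) ->
  (forall t, a <= t <= b -> is_derive psi t (dpsi t)) ->
  (forall t, a <= t <= b -> Rabs (dphi t) <= dpsi t) ->
  Rabs (phi b - phi a) <= psi b - psi a.
Proof.
  intros Hab Hphi Hpsi Hb.
  destruct (Req_dec a b) as [->|Hne].
  { rewrite !Rminus_diag, Rabs_R0. lra. }
  assert (Hlt : a < b) by lra.
  destruct (MVT_cor2 (fun t => phi t - psi t) (fun t => dphi t - dpsi t) a b Hlt) as [c1 [E1 H1]].
  { intros c Hc. apply is_derive_Reals. apply (is_derive_minus phi psi); auto. }
  destruct (MVT_cor2 (fun t => phi t + psi t) (fun t => dphi t + dpsi t) a b Hlt) as [c2 [E2 H2]].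
  { intros c Hc. apply is_derive_Reals. apply (is_derive_plus phi psi); auto. }
  assert (B1 := Hb c1 ltac:(lra)). assert (B2 := Hb c2 ltac:(lra)).
  apply Rabs_le. apply Rabs_le_between in B1. apply Rabs_le_between in B2.
  split; nra.
Qed.

Lemma Rpower_le_neg p u v : p <= 0 -> 0 < u <= v -> Rpower v p <= Rpower u p.
Proof.
  intros Hp Huv.
  assert (E : forall w, Rpower w p = / Rpower w (-p)) by (intro; rewrite <- Rpower_Ropp; f_equal; ring).
  rewrite !E.
  apply Rinv_le_contravar; [apply Rpower_pos'|]. apply Rle_Rpower_l; lra.
Qed.

Lemma Rpower_half p (m : nat) n t : p <= 0 -> - p <= INR m -> 0 < n -> n / 2 <= t ->
  Rpower t p <= 2 ^ m * Rpower n p.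
Proof.
  intros Hp Hm Hn Ht.
  apply Rle_trans with (Rpower (n / 2) p).
  { apply Rpower_le_neg; lra. }
  unfold Rdiv. rewrite <- Rpower_mult_distr by lra.
  rewrite Rmult_comm. apply Rmult_le_compat_r; [left; apply Rpower_pos'|].
  replace (Rpower (/ 2) p) with (Rpower 2 (- p)).
  - rewrite <- Rpower_pow by lra. apply Rle_Rpower; lra.
  - unfold Rpower. rewrite ln_Rinv by lra. f_equal. ring.
Qed.

Ltac solve_der :=
  auto_derive; [repeat split; try (apply Rpow_ex; lra) |
   rewrite ?Rpow_Derive by lra ].

Lemma taylor3 a n : 0 < a < 1 -> 2 <= n ->
  Rabs (Rpower (n-1) a - Rpower n a + a * Rpower n (a-1) - a*(a-1)/2 * Rpower n (a-2))
   <= 3 * Rpower n (a-3).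
Proof.
  intros Ha Hn.
  set (B := 16 * Rpower n (a-3)).
  assert (HB : forall t, 0 <= t <= 1 -> Rabs (a*(a-1)*(a-2)*Rpower (n-t) (a-3)) <= B).
  { intros t Ht. rewrite Rabs_mult, (Rabs_pos_eq (Rpower _ _)) by (left; apply Rpower_pos').
    apply Rle_trans with (2 * (2^3 * Rpower n (a-3))); [|unfold B; simpl; lra].
    apply Rmult_le_compat; try apply Rabs_pos; try (left; apply Rpower_pos').
    - rewrite !Rabs_mult. rewrite (Rabs_pos_eq a), (Rabs_left (a-1)), (Rabs_left (a-2)) by lra. nra.
    - apply Rpower_half; simpl; lra. }
  assert (S1 : forall s, 0 <= s <= 1 ->
     Rabs (a*(a-1)*Rpower (n-s) (a-2) - a*(a-1)*Rpower n (a-2)) <= B * s).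
  { intros s Hs.
    assert (C := cmp (fun t => a*(a-1)*Rpower (n-t) (a-2)) (fun t => B * t)
      (fun t => - (a*(a-1)*(a-2)*Rpower (n-t) (a-3))) (fun _ => B) 0 s ltac:(lra)).
    simpl in C. rewrite Rminus_0_r, Rmult_0_r, Rminus_0_r in C. apply C.
    - intros t Ht. solve_der. replace (n + - t) with (n - t) by ring.
      replace (a - 2 - 1) with (a - 3) by ring. ring.
    - intros t Ht. solve_der. ring.
    - intros t Ht. rewrite Rabs_Ropp. apply HB. lra. }
  assert (S2 : forall s, 0 <= s <= 1 ->
     Rabs (- a*Rpower (n-s) (a-1) + a*Rpower n (a-1) - s*(a*(a-1)*Rpower n (a-2))) <= B * s^2/2).
  { intros s Hs.
    assert (C := cmp (fun t => - a*Rpower (n-t) (a-1) + a*Rpower n (a-1) - t*(a*(a-1)*Rpower n (a-2)))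
      (fun t => B * t^2/2)
      (fun t => a*(a-1)*Rpower (n-t) (a-2) - a*(a-1)*Rpower n (a-2)) (fun t => B * t) 0 s ltac:(lra)).
    simpl in C. rewrite Rminus_0_r in C.
    replace (- a * Rpower n (a - 1) + a * Rpower n (a - 1) - 0 * (a * (a - 1) * Rpower n (a - 2))) with 0 in C by ring.
    replace (B * (0 * (0 * 1)) / 2) with 0 in C by field. rewrite !Rminus_0_r in C.
    replace (B * s^2/2) with (B * (s * (s * 1)) / 2) by field. apply C.
    - intros t Ht. solve_der. replace (n + - t) with (n - t) by ring.
      replace (a - 1 - 1) with (a - 2) by ring. ring.
    - intros t Ht. solve_der. field.
    - intros t Ht. apply S1. lra. }
  assert (C := cmp (fun t => Rpower (n-t) a - Rpower n a + t * (a*Rpower n (a-1)) - t^2/2 * (a*(a-1)*Rpower n (a-2)))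
      (fun t => B * t^3/6)
      (fun t => - a*Rpower (n-t) (a-1) + a*Rpower n (a-1) - t*(a*(a-1)*Rpower n (a-2))) (fun t => B * t^2/2) 0 1 ltac:(lra)).
  simpl in C. rewrite Rminus_0_r in C.
  replace (Rpower n a - Rpower n a + 0 * (a * Rpower n (a - 1)) - 0 * (0 * 1) / 2 * (a * (a - 1) * Rpower n (a - 2))) with 0 in C by field.
  replace (B * (0 * (0 * (0 * 1))) / 6) with 0 in C by field. rewrite Rminus_0_r, Rminus_0_r in C.
  replace (Rpower (n - 1) a - Rpower n a + a * Rpower n (a - 1) - a * (a - 1) / 2 * Rpower n (a - 2))
    with (Rpower (n - 1) a - Rpower n a + 1 * (a * Rpower n (a - 1)) - 1 * (1 * 1) / 2 * (a * (a - 1) * Rpower n (a - 2))) by field.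
  eapply Rle_trans. apply C.
  - intros t Ht. solve_der. replace (n + - t) with (n - t) by ring. field.
  - intros t Ht. solve_der. field.
  - intros t Ht. apply S2. lra.
  - unfold B. pose proof (Rpower_pos' n (a-3)). lra.
Qed.

Lemma taylor4 a k : 0 < a < 1 -> 2 <= k ->
  Rabs (Rpower (k-1) a - 2 * Rpower k a + Rpower (k+1) a - a*(a-1) * Rpower k (a-2))
   <= 8 * Rpower k (a-4).
Proof.
  intros Ha Hk.
  set (B := 96 * Rpower k (a-4)).
  set (c4 := a*(a-1)*(a-2)*(a-3)).
  assert (Hc4 : Rabs c4 <= 6).
  { unfold c4. rewrite !Rabs_mult. rewrite (Rabs_pos_eq a), (Rabs_left (a-1)), (Rabs_left (a-2)), (Rabs_left (a-3)) by lra.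
    assert (0 <= a * - (a-1) <= 1) by nra. assert (0 <= a * - (a-1) * - (a-2) <= 2) by nra. nra. }
  assert (HB : forall u, k / 2 <= u -> Rabs (c4 * Rpower u (a-4)) <= B).
  { intros u Hu. rewrite Rabs_mult, (Rabs_pos_eq (Rpower _ _)) by (left; apply Rpower_pos').
    apply Rle_trans with (6 * (2^4 * Rpower k (a-4))); [|unfold B; simpl; lra].
    apply Rmult_le_compat; try apply Rabs_pos; try (left; apply Rpower_pos'); auto.
    apply Rpower_half; simpl; lra. }
  assert (S1 : forall s, 0 <= s <= 1 ->
     Rabs (a*(a-1)*(a-2)*Rpower (k+s) (a-3) - a*(a-1)*(a-2)*Rpower (k-s) (a-3)) <= 2 * B * s).
  { intros s Hs.
    assert (C := cmp (fun t => a*(a-1)*(a-2)*Rpower (k+t) (a-3) - a*(a-1)*(a-2)*Rpower (k-t) (a-3)) (fun t => 2 * B * t)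
      (fun t => c4 * Rpower (k+t) (a-4) + c4 * Rpower (k-t) (a-4)) (fun _ => 2 * B) 0 s ltac:(lra)).
    simpl in C. rewrite !Rplus_0_r, !Rminus_0_r, Rminus_diag, Rmult_0_r, !Rminus_0_r in C. apply C.
    - intros t Ht. solve_der. replace (k + - t) with (k - t) by ring.
      replace (a - 3 - 1) with (a - 4) by ring. unfold c4. ring.
    - intros t Ht. solve_der. ring.
    - intros t Ht. eapply Rle_trans; [apply Rabs_triang|].
      assert (HB1 := HB (k+t) ltac:(lra)). assert (HB2 := HB (k-t) ltac:(lra)). lra. }
  assert (S2 : forall s, 0 <= s <= 1 ->
     Rabs (a*(a-1)*Rpower (k+s) (a-2) + a*(a-1)*Rpower (k-s) (a-2) - 2 * (a*(a-1)*Rpower k (a-2))) <= B * s^2).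
  { intros s Hs.
    assert (C := cmp (fun t => a*(a-1)*Rpower (k+t) (a-2) + a*(a-1)*Rpower (k-t) (a-2) - 2 * (a*(a-1)*Rpower k (a-2)))
      (fun t => B * t^2)
      (fun t => a*(a-1)*(a-2)*Rpower (k+t) (a-3) - a*(a-1)*(a-2)*Rpower (k-t) (a-3)) (fun t => 2 * B * t) 0 s ltac:(lra)).
    simpl in C. rewrite !Rplus_0_r, !Rminus_0_r in C.
    replace (a * (a - 1) * Rpower k (a - 2) + a * (a - 1) * Rpower k (a - 2) - 2 * (a * (a - 1) * Rpower k (a - 2))) with 0 in C by ring.
    replace (B * (0 * (0 * 1))) with 0 in C by ring. rewrite !Rminus_0_r in C.
    replace (B * s^2) with (B * (s * (s * 1))) by field. apply C.
    - intros t Ht. solve_der. replace (k + - t) with (k - t) by ring.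
      replace (a - 2 - 1) with (a - 3) by ring. ring.
    - intros t Ht. solve_der. field.
    - intros t Ht. apply S1. lra. }
  assert (S3 : forall s, 0 <= s <= 1 ->
     Rabs (a*Rpower (k+s) (a-1) - a*Rpower (k-s) (a-1) - 2 * s * (a*(a-1)*Rpower k (a-2))) <= B * s^3/3).
  { intros s Hs.
    assert (C := cmp (fun t => a*Rpower (k+t) (a-1) - a*Rpower (k-t) (a-1) - 2 * t * (a*(a-1)*Rpower k (a-2)))
      (fun t => B * t^3/3)
      (fun t => a*(a-1)*Rpower (k+t) (a-2) + a*(a-1)*Rpower (k-t) (a-2) - 2 * (a*(a-1)*Rpower k (a-2))) (fun t => B * t^2) 0 s ltac:(lra)).
    simpl in C. rewrite !Rplus_0_r, !Rminus_0_r in C.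
    replace (a * Rpower k (a - 1) - a * Rpower k (a - 1) - 2 * 0 * (a * (a - 1) * Rpower k (a - 2))) with 0 in C by ring.
    replace (B * (0 * (0 * (0 * 1))) / 3) with 0 in C by field. rewrite !Rminus_0_r in C.
    replace (B * s^3/3) with (B * (s * (s * (s * 1))) / 3) by field. replace (B * s^2) with (B * (s * (s * 1))) in * by field. apply C.
    - intros t Ht. solve_der. replace (k + - t) with (k - t) by ring.
      replace (a - 1 - 1) with (a - 2) by ring. ring.
    - intros t Ht. solve_der. field.
    - intros t Ht. replace (B * (t * (t * 1))) with (B * t^2) by field. apply S2. lra. }
  assert (C := cmp (fun t => Rpower (k+t) a + Rpower (k-t) a - 2 * Rpower k a - t^2 * (a*(a-1)*Rpower k (a-2)))
      (fun t => B * t^4/12)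
      (fun t => a*Rpower (k+t) (a-1) - a*Rpower (k-t) (a-1) - 2 * t * (a*(a-1)*Rpower k (a-2))) (fun t => B * t^3/3) 0 1 ltac:(lra)).
  simpl in C. rewrite !Rplus_0_r, !Rminus_0_r in C.
  replace (Rpower k a + Rpower k a - 2 * Rpower k a - 0 * (0 * 1) * (a * (a - 1) * Rpower k (a - 2))) with 0 in C by ring.
  replace (B * (0 * (0 * (0 * (0 * 1)))) / 12) with 0 in C by field. rewrite !Rminus_0_r in C.
  replace (Rpower (k-1) a - 2 * Rpower k a + Rpower (k+1) a - a*(a-1) * Rpower k (a-2))
    with (Rpower (k+1) a + Rpower (k-1) a - 2 * Rpower k a - 1 * (1 * 1) * (a*(a-1)*Rpower k (a-2))) by ring.
  eapply Rle_trans. apply C.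
  - intros t Ht. solve_der. replace (k + - t) with (k - t) by ring. field.
  - intros t Ht. solve_der. field.
  - intros t Ht. replace (B * (t * (t * (t * 1))) / 3) with (B * t^3/3) by field. apply S3. lra.
  - unfold B. pose proof (Rpower_pos' k (a-4)). lra.
Qed.

Lemma rpow_pos_eq u p : 0 < u -> rpow u p = Rpower u p.
Proof. intro H. unfold rpow. destruct (Rle_dec u 0); [lra|reflexivity]. Qed.

Lemma rpow_nonpos u p : u <= 0 -> rpow u p = 0.
Proof. intro H. unfold rpow. destruct (Rle_dec u 0); [reflexivity|lra]. Qed.

Lemma winv_eq x al s : s < x -> / rpow (x - s) al = Rpower (x - s) (- al).
Proof. intro H. rewrite rpow_pos_eq by lra. rewrite Rpower_Ropp. reflexivity. Qed.

Lemma loc_lt x t : t < x -> locally t (fun s => s < x).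
Proof. intro H. apply (open_lt x t H). Qed.

Lemma cont_w x al t : t < x -> continuous (fun s => / rpow (x - s) al) t.
Proof.
  intro H.
  apply (continuous_ext_loc _ (fun s => Rpower (x - s) (- al))).
  - eapply filter_imp; [|exact (loc_lt x t H)]. intros s Hs. simpl. rewrite winv_eq; auto.
  - apply (ex_derive_continuous (fun s => Rpower (x - s) (- al))). auto_derive. apply Rpow_ex. lra.
Qed.

Lemma der_W x al t : 0 < al < 1 -> t < x ->
  is_derive (fun s => - rpow (x - s) (1 - al) / (1 - al)) t (/ rpow (x - t) al).
Proof.
  intros Ha H.
  apply (is_derive_ext_loc (fun s => - Rpower (x - s) (1 - al) / (1 - al))).
  - eapply filter_imp; [|exact (loc_lt x t H)]. intros s Hs. simpl. rewrite rpow_pos_eq by lra. reflexivity.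
  - rewrite winv_eq by auto. auto_derive.
    + apply Rpow_ex. lra.
    + rewrite Rpow_Derive by lra. replace (1 - al - 1) with (- al) by ring.
      replace (x + - t) with (x - t) by ring. field. lra.
Qed.

Lemma w_mono x al a b : 0 < al -> a <= b -> b < x -> / rpow (x - a) al <= / rpow (x - b) al.
Proof.
  intros Ha Hab Hb. rewrite !winv_eq by lra. apply Rpower_le_neg; lra.
Qed.

Lemma small_pow q : 0 < q -> forall e, 0 < e -> exists d, 0 < d /\ forall u, 0 < u < d -> Rpower u q < e.
Proof.
  intros Hq e He. exists (Rpower e (/ q)). split; [apply Rpower_pos'|].
  intros u Hu. replace e with (Rpower (Rpower e (/ q)) q).
  - apply Rlt_Rpower_l; lra.
  - rewrite Rpower_mult, Rinv_l, Rpower_1; lra.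
Qed.

Definition Hyp (al x M2 : R) (y y1 y2 : R -> R) : Prop :=
  (0 < al < 1) /\ 0 < x /\
  (forall t, 0 <= t <= x -> is_derive y t (y1 t)) /\
  (forall t, 0 <= t <= x -> is_derive y1 t (y2 t)) /\
  (forall t, 0 <= t <= x -> Rabs (y2 t) <= M2).


Lemma lip1 al x M2 y y1 y2 : Hyp al x M2 y y1 y2 ->
  forall s t, 0 <= s <= x -> 0 <= t <= x -> Rabs (y1 t - y1 s) <= M2 * Rabs (t - s).
Proof.
  intros [Ha [Hx [H1 [H2 HM]]]].
  assert (K : forall s t, 0 <= s <= t -> t <= x -> Rabs (y1 t - y1 s) <= M2 * Rabs (t - s)).
  { intros s t Hs Ht. rewrite (Rabs_pos_eq (t - s)) by lra.
    replace (M2 * (t - s)) with (M2 * t - M2 * s) by ring.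
    apply (cmp y1 (fun u => M2 * u) y2 (fun _ => M2)); [lra| | |].
    - intros u Hu. apply H2. lra.
    - intros u Hu. auto_derive; auto. ring.
    - intros u Hu. apply HM. lra. }
  intros s t Hs Ht. destruct (Rle_dec s t).
  - apply K; lra.
  - rewrite <- Rabs_Ropp, Ropp_minus_distr, <- (Rabs_Ropp (t - s)), Ropp_minus_distr. apply K; lra.
Qed.

Lemma mvt_y al x M2 y y1 y2 : Hyp al x M2 y y1 y2 ->
  forall a b, 0 <= a < b -> b <= x -> exists xi, a < xi < b /\ (y b - y a) / (b - a) = y1 xi.
Proof.
  intros [Ha [Hx [H1 [H2 HM]]]] a b Hab Hb.
  destruct (MVT_cor2 y y1 a b ltac:(lra)) as [c [Ec Hc]].
  { intros c Hc. apply is_derive_Reals. apply H1. lra. }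
  exists c. split; auto. rewrite Ec. field. lra.
Qed.

Lemma delta_bound al x M2 y y1 y2 : Hyp al x M2 y y1 y2 ->
  forall a b t, 0 <= a < b -> b <= x -> a <= t <= b ->
  Rabs (y1 t - (y b - y a) / (b - a)) <= M2 * (b - a).
Proof.
  intros HH a b t Hab Hb Ht.
  destruct (mvt_y _ _ _ _ _ _ HH a b Hab Hb) as [xi [Hxi E]]. rewrite E.
  eapply Rle_trans. apply (lip1 _ _ _ _ _ _ HH); lra.
  destruct HH as [Ha [Hx [H1 [H2 HM]]]].
  assert (0 <= M2) by (eapply Rle_trans; [apply Rabs_pos|apply (HM a); lra]).
  apply Rmult_le_compat_l; auto. apply Rabs_le. lra.
Qed.

Lemma cont_y1 al x M2 y y1 y2 : Hyp al x M2 y y1 y2 ->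
  forall t, 0 <= t <= x -> continuous y1 t.
Proof.
  intros [Ha [Hx [H1 [H2 HM]]]] t Ht. apply (ex_derive_continuous y1). eexists. apply H2. auto.
Qed.

Lemma M2_nonneg al x M2 y y1 y2 : Hyp al x M2 y y1 y2 -> 0 <= M2.
Proof. intros [Ha [Hx [H1 [H2 HM]]]]. eapply Rle_trans; [apply Rabs_pos|apply (HM 0); lra]. Qed.

Definition wf al x t := / rpow (x - t) al.
Definition Wf al x t := - rpow (x - t) (1 - al) / (1 - al).
Definition ff (y1 : R -> R) al x t := y1 t / rpow (x - t) al.
Definition gf (y1 : R -> R) al x t := (y1 t - y1 x) / rpow (x - t) al.

Lemma is_RInt_w al x a b : 0 < al < 1 -> a <= b -> b < x -> is_RInt (wf al x) a b (Wf al x b - Wf al x a).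
Proof.
  intros Ha Hab Hb.
  apply (is_RInt_derive (Wf al x) (wf al x)).
  - intros t Ht. rewrite Rmin_left, Rmax_right in Ht by lra. apply der_W; lra.
  - intros t Ht. rewrite Rmin_left, Rmax_right in Ht by lra. apply cont_w; lra.
Qed.

Lemma cont_f al x M2 y y1 y2 : Hyp al x M2 y y1 y2 -> forall t, 0 <= t < x -> continuous (ff y1 al x) t.
Proof.
  intros HH t Ht.
  apply (continuous_mult y1 (fun s => / rpow (x - s) al)).
  - apply (cont_y1 _ _ _ _ _ _ HH). lra.
  - apply cont_w. lra.
Qed.

Lemma ex_RInt_f al x M2 y y1 y2 : Hyp al x M2 y y1 y2 -> forall a b, 0 <= a <= b -> b < x -> ex_RInt (ff y1 al x) a b.
Proof.
  intros HH a b Hab Hb. apply (ex_RInt_continuous (V := R_CompleteNormedModule)). intros t Ht.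
  rewrite Rmin_left, Rmax_right in Ht by lra. apply (cont_f _ _ _ _ _ _ HH). lra.
Qed.

Lemma is_RInt_y1 al x M2 y y1 y2 : Hyp al x M2 y y1 y2 -> forall a b, 0 <= a <= b -> b <= x -> is_RInt y1 a b (y b - y a).
Proof.
  intros HH a b Hab Hb.
  apply (is_RInt_derive y y1).
  - intros t Ht. rewrite Rmin_left, Rmax_right in Ht by lra. destruct HH as [_ [_ [H1 _]]]. apply H1. lra.
  - intros t Ht. rewrite Rmin_left, Rmax_right in Ht by lra. apply (cont_y1 _ _ _ _ _ _ HH). lra.
Qed.

Lemma IL al x M2 y y1 y2 : Hyp al x M2 y y1 y2 -> forall a b, 0 <= a < b -> b < x ->
  Rabs (RInt (ff y1 al x) a b - (y b - y a) / (b - a) * (Wf al x b - Wf al x a))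
   <= M2 * (b - a) * (b - a) * (wf al x b - wf al x a).
Proof.
  intros HH a b Hab Hb.
  set (d := (y b - y a) / (b - a)).
  assert (Ha : 0 < al < 1) by (destruct HH; auto).
  assert (I1 := RInt_correct _ _ _ (ex_RInt_f _ _ _ _ _ _ HH a b ltac:(lra) Hb)).
  assert (I2 := is_RInt_w al x a b Ha ltac:(lra) Hb).
  assert (I3 := is_RInt_y1 _ _ _ _ _ _ HH a b ltac:(lra) ltac:(lra)).
  assert (I4 := is_RInt_const a b (d * wf al x a)).
  assert (I5 := is_RInt_scal _ _ _ d _ I2).
  assert (I6 := is_RInt_scal _ _ _ (wf al x a) _ I3).
  assert (I7 := is_RInt_minus _ _ _ _ _ _ I1 I5).
  assert (I8 := is_RInt_minus _ _ _ _ _ _ I7 I6).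
  assert (I9 := is_RInt_plus _ _ _ _ _ _ I8 I4).
  set (G := fun t => (y1 t - d) * (wf al x t - wf al x a)).
  assert (I10 : is_RInt G a b (RInt (ff y1 al x) a b - d * (Wf al x b - Wf al x a))).
  { eapply is_RInt_ext; [|].
    2:{ replace (RInt (ff y1 al x) a b - d * (Wf al x b - Wf al x a)) with
        (plus (minus (minus (RInt (ff y1 al x) a b) (scal d (Wf al x b - Wf al x a))) (scal (wf al x a) (y b - y a)))
           (scal (b - a) (d * wf al x a))).
        exact I9.
        unfold minus, scal, opp, plus; simpl; unfold mult; simpl. unfold d. field. lra. }
    intros t Ht. unfold G, minus, scal, opp, plus; simpl; unfold mult; simpl. unfold ff, wf. unfold Rdiv. ring. }
  rewrite <- (is_RInt_unique _ _ _ _ I10).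
  replace (M2 * (b - a) * (b - a) * (wf al x b - wf al x a)) with ((b - a) * (M2 * (b - a) * (wf al x b - wf al x a))) by ring.
  apply abs_RInt_le_const; [lra| eexists; exact I10 |].
  intros t Ht. unfold G. rewrite Rabs_mult.
  assert (M2p := M2_nonneg _ _ _ _ _ _ HH).
  apply Rmult_le_compat; try apply Rabs_pos.
  - apply (delta_bound _ _ _ _ _ _ HH); lra.
  - assert (wf al x a <= wf al x t) by (apply w_mono; lra).
    assert (wf al x t <= wf al x b) by (apply w_mono; lra).
    rewrite Rabs_pos_eq; lra.
Qed.

Fixpoint sm (F : nat -> R) (m : nat) : R :=
  match m with O => 0 | S m => sm F m + F m end.

Definition Fj (y : R -> R) al x h (j : nat) :=
  (y (INR (S j) * h) - y (INR j * h)) / h * (Wf al x (INR (S j) * h) - Wf al x (INR j * h)).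

Lemma Acc al x M2 y y1 y2 : Hyp al x M2 y y1 y2 -> forall h, 0 < h -> forall m, INR m * h < x ->
  ex_RInt (ff y1 al x) 0 (INR m * h) /\
  Rabs (RInt (ff y1 al x) 0 (INR m * h) - sm (Fj y al x h) m) <= M2 * h * h * (wf al x (INR m * h) - wf al x 0).
Proof.
  intros HH h Hh. induction m; intro Hm.
  - simpl INR. rewrite Rmult_0_l. split.
    + apply ex_RInt_point.
    + rewrite RInt_point. simpl. change (@zero R_NormedModule) with 0. rewrite !Rminus_diag, Rabs_R0, Rmult_0_r. lra.
  - assert (Hm' : INR m * h < x) by (rewrite S_INR in Hm; lra).
    destruct (IHm Hm') as [Ex Bd].
    assert (Hm0 : 0 <= INR m * h) by (apply Rmult_le_pos; [apply pos_INR|lra]).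
    assert (Ex2 := ex_RInt_f _ _ _ _ _ _ HH (INR m * h) (INR (S m) * h) ltac:(rewrite S_INR; lra) Hm).
    split; [eapply ex_RInt_Chasles; eauto|].
    rewrite <- (RInt_Chasles _ 0 (INR m * h) (INR (S m) * h) Ex Ex2).
    assert (I := IL _ _ _ _ _ _ HH (INR m * h) (INR (S m) * h) ltac:(rewrite S_INR; lra) Hm).
    replace (INR (S m) * h - INR m * h) with h in I by (rewrite S_INR; ring).
    simpl sm. unfold Fj at 2. change (plus ?u ?v) with (u + v).
    replace (RInt (ff y1 al x) 0 (INR m * h) + RInt (ff y1 al x) (INR m * h) (INR (S m) * h) -
      (sm (Fj y al x h) m + (y (INR (S m) * h) - y (INR m * h)) / h *
         (Wf al x (INR (S m) * h) - Wf al x (INR m * h))))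
    with ((RInt (ff y1 al x) 0 (INR m * h) - sm (Fj y al x h) m) +
          (RInt (ff y1 al x) (INR m * h) (INR (S m) * h) - (y (INR (S m) * h) - y (INR m * h)) / h *
         (Wf al x (INR (S m) * h) - Wf al x (INR m * h)))) by ring.
    eapply Rle_trans; [apply Rabs_triang|]. lra.
Qed.

Lemma gzero al x y1 t : x <= t -> gf y1 al x t = 0.
Proof. intro H. unfold gf. rewrite rpow_nonpos by lra. unfold Rdiv. rewrite Rinv_0. ring. Qed.

Lemma gbound al x M2 y y1 y2 : Hyp al x M2 y y1 y2 -> forall t, 0 <= t < x ->
  Rabs (gf y1 al x t) <= M2 * Rpower (x - t) (1 - al).
Proof.
  intros HH t Ht. unfold gf, Rdiv. rewrite winv_eq by lra.
  rewrite Rabs_mult, (Rabs_pos_eq (Rpower _ _)) by (left; apply Rpower_pos').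
  replace (Rpower (x - t) (1 - al)) with ((x - t) * Rpower (x - t) (- al)).
  2:{ replace (1 - al) with (1 + - al) by ring. rewrite Rpower_plus, Rpower_1 by lra. reflexivity. }
  rewrite <- Rmult_assoc. apply Rmult_le_compat_r; [left; apply Rpower_pos'|].
  assert (L := lip1 _ _ _ _ _ _ HH t x ltac:(lra) ltac:(destruct HH as [_ [Hx _]]; lra)).
  rewrite <- Rabs_Ropp, Ropp_minus_distr, (Rabs_pos_eq (x - t)) in L by lra. exact L.
Qed.

Lemma cont_g al x M2 y y1 y2 : Hyp al x M2 y y1 y2 -> forall t, 0 <= t <= x -> continuous (gf y1 al x) t.
Proof.
  intros HH t Ht.
  assert (Ha : 0 < al < 1) by (destruct HH; auto).
  assert (Hx : 0 < x) by (destruct HH as [_ [Hx _]]; auto).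
  destruct (Req_dec t x) as [->|Hne].
  - apply continuity_pt_filterlim.
    unfold continuity_pt, continue_in, limit1_in, limit_in. intros eps Heps.
    assert (M2p := M2_nonneg _ _ _ _ _ _ HH).
    destruct (small_pow (1 - al) ltac:(lra) (eps / (M2 + 1)) ltac:(apply Rdiv_lt_0_compat; lra)) as [d [Hd Hs]].
    exists (Rmin d x). split; [apply Rmin_pos; lra|].
    intros t [_ Ht']. simpl in Ht'. unfold R_dist in Ht'. simpl. unfold R_dist.
    rewrite (gzero al x y1 x) by lra. rewrite Rminus_0_r.
    destruct (Rle_dec x t).
    + rewrite gzero by lra. rewrite Rabs_R0. lra.
    + assert (Hxt : 0 < x - t < d).
      { apply Rabs_def2 in Ht'. pose proof (Rmin_l d x). lra. }
      assert (t0 : 0 <= t).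
      { apply Rabs_def2 in Ht'. pose proof (Rmin_r d x). lra. }
      eapply Rle_lt_trans; [apply (gbound _ _ _ _ _ _ HH); lra|].
      specialize (Hs (x - t) Hxt).
      apply Rle_lt_trans with (M2 * (eps / (M2 + 1))).
      * apply Rmult_le_compat_l; lra.
      * replace (M2 * (eps / (M2 + 1))) with (eps * (M2 / (M2 + 1))) by (field; lra).
        assert (M2 / (M2 + 1) < 1) by (apply (Rmult_lt_reg_r (M2 + 1)); [lra|]; unfold Rdiv; rewrite Rmult_assoc, Rinv_l by lra; lra).
        nra.
  - apply (continuous_ext_loc _ (fun s => (y1 s - y1 x) * / rpow (x - s) al)).
    + apply filter_forall. intros s. reflexivity.
    + apply (continuous_mult (fun s => y1 s - y1 x) (fun s => / rpow (x - s) al)).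
      * apply (continuous_minus y1 (fun _ => y1 x)). apply (cont_y1 _ _ _ _ _ _ HH); lra. apply continuous_const.
      * apply cont_w. lra.
Qed.

Lemma ex_RInt_g al x M2 y y1 y2 : Hyp al x M2 y y1 y2 -> forall a b, 0 <= a <= b -> b <= x -> ex_RInt (gf y1 al x) a b.
Proof.
  intros HH a b Hab Hb. apply (ex_RInt_continuous (V := R_CompleteNormedModule)). intros t Ht.
  rewrite Rmin_left, Rmax_right in Ht by lra. apply (cont_g _ _ _ _ _ _ HH). lra.
Qed.

Lemma RInt_g_f al x M2 y y1 y2 : Hyp al x M2 y y1 y2 -> forall a b, 0 <= a <= b -> b < x ->
  RInt (gf y1 al x) a b = RInt (ff y1 al x) a b - y1 x * (Wf al x b - Wf al x a).
Proof.
  intros HH a b Hab Hb.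
  assert (Ha : 0 < al < 1) by (destruct HH; auto).
  apply is_RInt_unique.
  assert (I1 := RInt_correct _ _ _ (ex_RInt_f _ _ _ _ _ _ HH a b Hab Hb)).
  assert (I2 := is_RInt_scal _ _ _ (y1 x) _ (is_RInt_w al x a b Ha ltac:(lra) Hb)).
  assert (I3 := is_RInt_minus _ _ _ _ _ _ I1 I2).
  eapply is_RInt_ext; [|exact I3].
  intros t Ht. unfold minus, scal, opp, plus; simpl; unfold mult; simpl. unfold gf, ff, wf, Rdiv. ring.
Qed.

Lemma Wf_x al x : Wf al x x = 0.
Proof. unfold Wf. rewrite rpow_nonpos by lra. unfold Rdiv. ring. Qed.

Lemma Rpower_2a h al : 0 < h -> h * h * Rpower h (- al) = Rpower h (2 - al).
Proof.
  intro Hh. replace (2 - al) with (1 + (1 + - al)) by ring.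
  rewrite !Rpower_plus, Rpower_1 by lra. ring.
Qed.

Lemma Rpower_1a h al : 0 < h -> h * Rpower h (1 - al) = Rpower h (2 - al).
Proof.
  intro Hh. replace (2 - al) with (1 + (1 - al)) by ring.
  rewrite !Rpower_plus, Rpower_1 by lra. ring.
Qed.

Lemma LI al x M2 y y1 y2 : Hyp al x M2 y y1 y2 -> forall a, 0 <= a < x ->
  Rabs (RInt (gf y1 al x) a x + y1 x * (Wf al x x - Wf al x a) - (y x - y a) / (x - a) * (Wf al x x - Wf al x a))
   <= M2 * (1 + / (1 - al)) * Rpower (x - a) (2 - al).
Proof.
  intros HH a Ha.
  assert (Hal : 0 < al < 1) by (destruct HH; auto).
  assert (M2p := M2_nonneg _ _ _ _ _ _ HH).
  set (h := x - a).
  assert (EW : Wf al x x - Wf al x a = Rpower h (1 - al) / (1 - al)).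
  { rewrite Wf_x. unfold Wf. rewrite rpow_pos_eq by lra. fold h. field. lra. }
  rewrite EW.
  replace (RInt (gf y1 al x) a x + y1 x * (Rpower h (1 - al) / (1 - al)) - (y x - y a) / h * (Rpower h (1 - al) / (1 - al)))
    with (RInt (gf y1 al x) a x + (y1 x - (y x - y a) / h) * (Rpower h (1 - al) / (1 - al))) by ring.
  eapply Rle_trans; [apply Rabs_triang|].
  assert (B1 : Rabs (RInt (gf y1 al x) a x) <= M2 * Rpower h (2 - al)).
  { rewrite <- Rpower_1a by (unfold h; lra).
    replace (M2 * (h * Rpower h (1 - al))) with ((x - a) * (M2 * Rpower h (1 - al))) by (unfold h; ring).
    apply abs_RInt_le_const; [lra| apply (ex_RInt_g _ _ _ _ _ _ HH); lra|].
    intros t Ht. destruct (Req_dec t x) as [->|Hne].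
    - rewrite gzero, Rabs_R0 by lra. apply Rmult_le_pos; [lra|left; apply Rpower_pos'].
    - eapply Rle_trans; [apply (gbound _ _ _ _ _ _ HH); lra|].
      apply Rmult_le_compat_l; [lra|]. apply Rle_Rpower_l; unfold h; lra. }
  assert (B2 : Rabs ((y1 x - (y x - y a) / h) * (Rpower h (1 - al) / (1 - al))) <= M2 * / (1 - al) * Rpower h (2 - al)).
  { rewrite Rabs_mult. rewrite (Rabs_pos_eq (_ / _)) by (apply Rmult_le_pos; [left; apply Rpower_pos'|left; apply Rinv_0_lt_compat; lra]).
    rewrite <- Rpower_1a by (unfold h; lra).
    replace (M2 * / (1 - al) * (h * Rpower h (1 - al))) with ((M2 * h) * (Rpower h (1 - al) / (1 - al))) by (field; lra).
    apply Rmult_le_compat_r; [apply Rmult_le_pos; [left; apply Rpower_pos'|left; apply Rinv_0_lt_compat; lra]|].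
    unfold h. apply (delta_bound _ _ _ _ _ _ HH); lra. }
  lra.
Qed.

Definition Ival al x y1 := RInt (gf y1 al x) 0 x + y1 x * (Wf al x x - Wf al x 0).

Lemma L1err al x M2 y y1 y2 : Hyp al x M2 y y1 y2 -> forall (n : nat) h, (1 <= n)%nat -> 0 < h -> INR n * h = x ->
  Rabs (sm (Fj y al x h) n - Ival al x y1) <= M2 * (2 + / (1 - al)) * Rpower h (2 - al).
Proof.
  intros HH n h Hn Hh Hnx.
  assert (Hal : 0 < al < 1) by (destruct HH; auto).
  assert (M2p := M2_nonneg _ _ _ _ _ _ HH).
  destruct n as [|m]; [lia|].
  assert (Ea : INR m * h = x - h) by (rewrite S_INR in Hnx; lra).
  assert (Hm0 : 0 <= INR m * h) by (apply Rmult_le_pos; [apply pos_INR|lra]).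
  destruct (Acc _ _ _ _ _ _ HH h Hh m ltac:(lra)) as [Ex Bd].
  assert (Eg := RInt_g_f _ _ _ _ _ _ HH 0 (INR m * h) ltac:(lra) ltac:(lra)).
  assert (Ch := RInt_Chasles (gf y1 al x) 0 (INR m * h) x (ex_RInt_g _ _ _ _ _ _ HH 0 (INR m * h) ltac:(lra) ltac:(lra))
      (ex_RInt_g _ _ _ _ _ _ HH (INR m * h) x ltac:(lra) ltac:(lra))).
  change (plus ?u ?v) with (u + v) in Ch.
  assert (L := LI _ _ _ _ _ _ HH (INR m * h) ltac:(lra)).
  replace (x - INR m * h) with h in L by lra.
  unfold Ival. rewrite <- Ch, Eg. simpl sm. unfold Fj at 2.
  rewrite Hnx. rewrite Ea in *.
  replace (sm (Fj y al x h) m + (y x - y (x - h)) / h * (Wf al x x - Wf al x (x - h)) -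
    (RInt (ff y1 al x) 0 (x - h) - y1 x * (Wf al x (x - h) - Wf al x 0) + RInt (gf y1 al x) (x - h) x +
     y1 x * (Wf al x x - Wf al x 0)))
  with (- (RInt (ff y1 al x) 0 (x - h) - sm (Fj y al x h) m) -
        (RInt (gf y1 al x) (x - h) x + y1 x * (Wf al x x - Wf al x (x - h)) - (y x - y (x - h)) / h * (Wf al x x - Wf al x (x - h)))) by ring.
  eapply Rle_trans; [apply Rabs_triang|]. rewrite !Rabs_Ropp.
  assert (Hw : wf al x (x - h) = Rpower h (- al)).
  { unfold wf. rewrite winv_eq by lra. f_equal. ring. }
  assert (Hw0 : 0 < wf al x 0) by (unfold wf; rewrite winv_eq by lra; apply Rpower_pos').
  rewrite Hw in Bd. rewrite <- (Rpower_2a h al Hh).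
  assert (M2 * h * h * (Rpower h (- al) - wf al x 0) <= M2 * (h * h * Rpower h (- al))).
  { replace (M2 * (h * h * Rpower h (- al))) with (M2 * h * h * Rpower h (- al)) by ring.
    assert (0 <= M2 * h * h) by (apply Rmult_le_pos; [apply Rmult_le_pos|]; lra). nra. }
  rewrite Rpower_2a in * by lra.
  replace (M2 * (2 + / (1 - al)) * Rpower h (2 - al)) with
    (M2 * Rpower h (2 - al) + M2 * (1 + / (1 - al)) * Rpower h (2 - al)) by ring.
  lra.
Qed.

Lemma improper al x M2 y y1 y2 : Hyp al x M2 y y1 y2 ->
  improper_int_right (fun t => y1 t / rpow (x - t) al) 0 x (Ival al x y1).
Proof.
  intros HH eps Heps.
  assert (Hal : 0 < al < 1) by (destruct HH; auto).
  assert (Hx : 0 < x) by (destruct HH as [_ [Hx _]]; auto).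
  assert (M2p := M2_nonneg _ _ _ _ _ _ HH).
  set (K := M2 * x + Rabs (y1 x) / (1 - al) + 1).
  assert (HK : 0 < K).
  { unfold K. assert (0 <= Rabs (y1 x) / (1 - al)) by (apply Rmult_le_pos; [apply Rabs_pos|left; apply Rinv_0_lt_compat; lra]).
    nra. }
  destruct (small_pow (1 - al) ltac:(lra) (eps / K) ltac:(apply Rdiv_lt_0_compat; lra)) as [d [Hd Hs]].
  exists (Rmin d x). split; [apply Rmin_pos; lra|].
  intros c Hc0 Hc.
  assert (Hcd : 0 < x - c < d) by (pose proof (Rmin_l d x); lra).
  exists (ex_RInt_Reals_0 _ _ _ (ex_RInt_f _ _ _ _ _ _ HH 0 c ltac:(lra) ltac:(lra))).
  rewrite <- RInt_Reals.
  change (RInt (fun t : R => y1 t / rpow (x - t) al) 0 c) with (RInt (ff y1 al x) 0 c).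
  assert (Eg := RInt_g_f _ _ _ _ _ _ HH 0 c ltac:(lra) ltac:(lra)).
  assert (Ch := RInt_Chasles (gf y1 al x) 0 c x (ex_RInt_g _ _ _ _ _ _ HH 0 c ltac:(lra) ltac:(lra))
      (ex_RInt_g _ _ _ _ _ _ HH c x ltac:(lra) ltac:(lra))).
  change (plus ?u ?v) with (u + v) in Ch.
  unfold Ival. rewrite <- Ch.
  replace (RInt (ff y1 al x) 0 c - (RInt (gf y1 al x) 0 c + RInt (gf y1 al x) c x + y1 x * (Wf al x x - Wf al x 0)))
    with (- (RInt (gf y1 al x) c x + y1 x * (Wf al x x - Wf al x c))) by (rewrite Eg; ring).
  rewrite Rabs_Ropp. eapply Rle_lt_trans; [apply Rabs_triang|].
  specialize (Hs (x - c) Hcd).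
  assert (P0 : 0 < Rpower (x - c) (1 - al)) by apply Rpower_pos'.
  assert (B1 : Rabs (RInt (gf y1 al x) c x) <= (x - c) * (M2 * Rpower (x - c) (1 - al))).
  { apply abs_RInt_le_const; [lra| apply (ex_RInt_g _ _ _ _ _ _ HH); lra|].
    intros t Ht. destruct (Req_dec t x) as [->|Hne].
    - rewrite gzero, Rabs_R0 by lra. apply Rmult_le_pos; lra.
    - eapply Rle_trans; [apply (gbound _ _ _ _ _ _ HH); lra|].
      apply Rmult_le_compat_l; [lra|]. apply Rle_Rpower_l; lra. }
  assert (B2 : Rabs (y1 x * (Wf al x x - Wf al x c)) = Rabs (y1 x) / (1 - al) * Rpower (x - c) (1 - al)).
  { rewrite Wf_x. unfold Wf. rewrite rpow_pos_eq by lra. rewrite Rabs_mult.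
    replace (0 - - Rpower (x - c) (1 - al) / (1 - al)) with (Rpower (x - c) (1 - al) / (1 - al)) by (field; lra).
    rewrite (Rabs_pos_eq (_ / _)) by (apply Rmult_le_pos; [lra|left; apply Rinv_0_lt_compat; lra]).
    field. lra. }
  rewrite B2.
  assert ((x - c) * (M2 * Rpower (x - c) (1 - al)) <= x * M2 * Rpower (x - c) (1 - al)).
  { rewrite <- Rmult_assoc. apply Rmult_le_compat_r; [lra|]. nra. }
  assert (Rpower (x - c) (1 - al) * K < eps).
  { apply (Rmult_lt_compat_r K) in Hs; [|lra]. unfold Rdiv in Hs. rewrite Rmult_assoc, Rinv_l, Rmult_1_r in Hs by lra. exact Hs. }
  unfold K in H0. nra.
Qed.

Definition lw a (n k : nat) : R :=
  if Nat.eqb k 0 then 1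
  else if Nat.ltb k n then rpow (INR k - 1) a - 2 * rpow (INR k) a + rpow (INR k + 1) a
  else rpow (INR n - 1) a - rpow (INR n) a.

Definition bw a (m : nat) := rpow (INR m + 1) a - rpow (INR m) a.

Lemma rpow0 a : rpow 0 a = 0.
Proof. apply rpow_nonpos. lra. Qed.

Lemma rpow1 a : rpow 1 a = 1.
Proof. rewrite rpow_pos_eq by lra. unfold Rpower. rewrite ln_1, Rmult_0_r. apply exp_0. Qed.

Lemma lw_id a : forall p (z : nat -> R),
  sum_f_R0 (fun k => lw a (S p) k * z k) (S p) = sm (fun m => bw a m * (z m - z (S m))) (S p).
Proof.
  induction p; intro z.
  - simpl. unfold lw, bw. simpl. replace (1 - 1) with 0 by ring. replace (0 + 1) with 1 by ring.
    rewrite rpow0, rpow1. ring.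
  - change (sum_f_R0 (fun k => lw a (S (S p)) k * z k) (S (S p))) with
      (sum_f_R0 (fun k => lw a (S (S p)) k * z k) p + lw a (S (S p)) (S p) * z (S p) + lw a (S (S p)) (S (S p)) * z (S (S p))).
    rewrite (sum_eq _ (fun k => lw a (S p) k * z k)).
    2:{ intros i Hi. f_equal. unfold lw. destruct (Nat.eqb i 0); auto.
        replace (Nat.ltb i (S (S p))) with true by (symmetry; apply Nat.ltb_lt; lia).
        replace (Nat.ltb i (S p)) with true by (symmetry; apply Nat.ltb_lt; lia). reflexivity. }
    assert (E := IHp z). change (sum_f_R0 (fun k => lw a (S p) k * z k) (S p)) with
      (sum_f_R0 (fun k => lw a (S p) k * z k) p + lw a (S p) (S p) * z (S p)) in E.
    change (sm (fun m => bw a m * (z m - z (S m))) (S (S p))) with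
      (sm (fun m => bw a m * (z m - z (S m))) (S p) + bw a (S p) * (z (S p) - z (S (S p)))).
    rewrite <- E.
    unfold lw. simpl Nat.eqb.
    replace (Nat.ltb (S p) (S (S p))) with true by (symmetry; apply Nat.ltb_lt; lia).
    replace (Nat.ltb (S p) (S p)) with false by (symmetry; apply Nat.ltb_ge; lia).
    replace (Nat.ltb (S (S p)) (S (S p))) with false by (symmetry; apply Nat.ltb_ge; lia).
    unfold bw. replace (INR (S (S p)) - 1) with (INR (S p)) by (rewrite (S_INR (S p)); ring).
    rewrite (S_INR (S p)). ring.
Qed.

Lemma sm_ext (F G : nat -> R) n : (forall j, (j < n)%nat -> F j = G j) -> sm F n = sm G n.
Proof.
  induction n; intro H; simpl; auto. rewrite IHn by (intros; apply H; lia). rewrite H by lia. reflexivity.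
Qed.

Lemma sm_shift (F : nat -> R) n : sm F (S n) = F 0%nat + sm (fun j => F (S j)) n.
Proof.
  induction n.
  - simpl. ring.
  - change (sm F (S (S n))) with (sm F (S n) + F (S n)). rewrite IHn. simpl. ring.
Qed.

Lemma sm_rev (G : nat -> R) n : sm G n = sm (fun j => G (n - 1 - j)%nat) n.
Proof.
  induction n.
  - reflexivity.
  - change (sm G (S n)) with (sm G n + G n).
    rewrite (sm_shift (fun j => G (S n - 1 - j)%nat)). rewrite IHn.
    replace (S n - 1 - 0)%nat with n by lia.
    rewrite (sm_ext (fun j => G (S n - 1 - S j)%nat) (fun j => G (n - 1 - j)%nat)) by (intros; f_equal; lia).
    ring.
Qed.

Lemma sm_scal (F : nat -> R) c n : sm (fun j => c * F j) n = c * sm F n.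
Proof. induction n; simpl; [ring|rewrite IHn; ring]. Qed.

Lemma rpow_mulh u h a : 0 <= u -> 0 < h -> rpow (u * h) a = rpow u a * Rpower h a.
Proof.
  intros Hu Hh. destruct (Req_dec u 0) as [->|Hne].
  - rewrite Rmult_0_l, rpow0. ring.
  - rewrite !rpow_pos_eq by nra. rewrite Rpower_mult_distr by lra. reflexivity.
Qed.

Lemma Fj_sum y al x h n : 0 < al < 1 -> 0 < h -> (1 <= n)%nat -> INR n * h = x ->
  sm (Fj y al x h) n = Rpower h (- al) / (1 - al) *
     sum_f_R0 (fun k => lw (1 - al) n k * y (INR (n - k) * h)) n.
Proof.
  intros Hal Hh Hn Hx.
  set (z := fun k => y (INR (n - k) * h)).
  change (sum_f_R0 (fun k => lw (1 - al) n k * y (INR (n - k) * h)) n) with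
    (sum_f_R0 (fun k => lw (1 - al) n k * z k) n).
  destruct n as [|p]; [lia|].
  rewrite lw_id, sm_rev, <- sm_scal.
  apply sm_ext. intros j Hj.
  unfold Fj, Wf, bw, z.
  replace (S p - j)%nat with (S (S p - 1 - j)) by lia.
  replace (S p - S j)%nat with (S p - 1 - j)%nat by lia.
  assert (E1 : x - INR (S (S p - 1 - j)) * h = INR j * h).
  { rewrite <- Hx. assert (INR (S (S p - 1 - j)) = INR (S p) - INR j) by (rewrite <- minus_INR by lia; f_equal; lia).
    rewrite H. ring. }
  assert (E2 : x - INR (S p - 1 - j) * h = (INR j + 1) * h).
  { rewrite <- Hx. assert (INR (S p - 1 - j) = INR (S p) - INR (S j)) by (rewrite <- minus_INR by lia; f_equal; lia).
    rewrite H, (S_INR j). ring. }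
  rewrite E1, E2, !rpow_mulh by (try apply pos_INR; pose proof (pos_INR j); lra).
  replace (Rpower h (1 - al)) with (h * Rpower h (- al)).
  2:{ replace (1 - al) with (1 + - al) by ring. rewrite Rpower_plus, Rpower_1 by lra. reflexivity. }
  field. lra.
Qed.

Lemma ceil5_ge N : (5 * ceil5 N >= N)%nat.
Proof.
  unfold ceil5. pose proof (Nat.div_mod (N+4) 5 ltac:(lia)). pose proof (Nat.mod_upper_bound (N+4) 5 ltac:(lia)). lia.
Qed.

Lemma inv_rels al : 0 < al < 1 ->
  / Gamma (1 - al) = (1 - al) * / Gamma (2 - al) /\
  / Gamma (- al) = (1 - al) * (- al) * / Gamma (2 - al).
Proof.
  intros Hal. destruct (gamma_facts al Hal) as [E1 E2].
  assert (I1 : / Gamma (1 - al) = (1 - al) * / Gamma (2 - al)).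
  { rewrite E1, Rinv_mult, <- Rmult_assoc, Rinv_r, Rmult_1_l by lra. reflexivity. }
  split; auto.
  rewrite E2, Rinv_mult in I1.
  assert (/ Gamma (- al) = - al * ((1 - al) * / Gamma (2 - al))).
  { rewrite <- I1, <- Rmult_assoc, Rinv_r, Rmult_1_l by lra. reflexivity. }
  rewrite H. ring.
Qed.

Definition corr al N n k := sigma_bar al N n k - lw (1 - al) n k / Gamma (2 - al).

Lemma corr_zero al N n k : (k <= n)%nat -> (k <= ceil5 N)%nat -> corr al N n k = 0.
Proof.
  intros Hkn HkK. unfold corr, sigma_bar, lw.
  destruct (Nat.eqb k 0) eqn:E0; [unfold Rdiv; ring|].
  destruct (Nat.ltb k n) eqn:E1.
  - replace (Nat.leb k (ceil5 N)) with true by (symmetry; apply Nat.leb_le; lia). unfold Rdiv; ring.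
  - apply Nat.ltb_ge in E1. replace (Nat.leb n (ceil5 N)) with true by (symmetry; apply Nat.leb_le; lia). unfold Rdiv; ring.
Qed.

Lemma Rpower_split k p q : Rpower k (p + q) = Rpower k p * Rpower k q.
Proof. apply Rpower_plus. Qed.

Lemma corr_mid al N n k : 0 < al < 1 -> (ceil5 N < k)%nat -> (k < n)%nat -> (2 <= k)%nat ->
  Rabs (corr al N n k) <= (8 * Rabs (/ Gamma (2 - al)) + Rabs (/ Gamma (-2 - al))) * Rpower (INR k) (- al - 3).
Proof.
  intros Hal HK Hkn Hk2.
  destruct (inv_rels al Hal) as [I1 I0].
  assert (Hk : 2 <= INR k) by (replace 2 with (INR 2) by (simpl; ring); apply le_INR; lia).
  unfold corr, sigma_bar, lw.
  replace (Nat.eqb k 0) with false by (symmetry; apply Nat.eqb_neq; lia).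
  replace (Nat.ltb k n) with true by (symmetry; apply Nat.ltb_lt; lia).
  replace (Nat.leb k (ceil5 N)) with false by (symmetry; apply Nat.leb_gt; lia).
  rewrite !rpow_pos_eq by lra.
  set (a := 1 - al).
  assert (e1 : 1 / (Gamma (- al) * Rpower (INR k) (1 + al)) = a * (a - 1) * / Gamma (2 - al) * Rpower (INR k) (a - 2)).
  { unfold Rdiv. rewrite Rmult_1_l, Rinv_mult, I0. replace (a - 2) with (- (1 + al)) by (unfold a; ring).
    rewrite Rpower_Ropp. unfold a. ring. }
  assert (e2 : al / (12 * Gamma (-2 - al) * Rpower (INR k) (3 + al)) = al / 12 * / Gamma (-2 - al) * Rpower (INR k) (a - 4)).
  { unfold Rdiv. rewrite !Rinv_mult. replace (a - 4) with (- (3 + al)) by (unfold a; ring).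
    rewrite Rpower_Ropp. ring. }
  rewrite e1, e2.
  assert (TY := taylor4 a (INR k) ltac:(unfold a; lra) Hk).
  replace (- al - 3) with (a - 4) by (unfold a; ring).
  replace (a * (a - 1) * / Gamma (2 - al) * Rpower (INR k) (a - 2) + al / 12 * / Gamma (-2 - al) * Rpower (INR k) (a - 4) -
    (Rpower (INR k - 1) a - 2 * Rpower (INR k) a + Rpower (INR k + 1) a) / Gamma (2 - al))
   with (- (/ Gamma (2 - al)) * (Rpower (INR k - 1) a - 2 * Rpower (INR k) a + Rpower (INR k + 1) a - a * (a - 1) * Rpower (INR k) (a - 2))
         + al / 12 * / Gamma (-2 - al) * Rpower (INR k) (a - 4)) by (unfold Rdiv; ring).
  eapply Rle_trans; [apply Rabs_triang|].
  rewrite !Rabs_mult, Rabs_Ropp.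
  pose proof (Rpower_pos' (INR k) (a - 4)).
  rewrite (Rabs_pos_eq (Rpower _ _)) by lra.
  rewrite (Rabs_pos_eq (al / 12)) by lra.
  assert (Rabs (/ Gamma (2 - al)) * Rabs (Rpower (INR k - 1) a - 2 * Rpower (INR k) a + Rpower (INR k + 1) a - a * (a - 1) * Rpower (INR k) (a - 2))
     <= Rabs (/ Gamma (2 - al)) * (8 * Rpower (INR k) (a - 4))) by (apply Rmult_le_compat_l; [apply Rabs_pos|exact TY]).
  pose proof (Rabs_pos (/ Gamma (-2 - al))). pose proof (Rabs_pos (/ Gamma (2 - al))).
  assert (al / 12 * Rabs (/ Gamma (-2 - al)) * Rpower (INR k) (a - 4) <= Rabs (/ Gamma (-2 - al)) * Rpower (INR k) (a - 4)).
  { apply Rmult_le_compat_r; [lra|]. nra. }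
  nra.
Qed.

Lemma corr_last al N n : 0 < al < 1 -> (ceil5 N < n)%nat -> (2 <= n)%nat ->
  Rabs (corr al N n n) <= (3 * Rabs (/ Gamma (2 - al)) + Rabs (/ Gamma (-1 - al))) * Rpower (INR n) (- al - 2).
Proof.
  intros Hal HK Hn2.
  destruct (inv_rels al Hal) as [I1 I0].
  assert (Hn : 2 <= INR n) by (replace 2 with (INR 2) by (simpl; ring); apply le_INR; lia).
  unfold corr, sigma_bar, lw.
  replace (Nat.eqb n 0) with false by (symmetry; apply Nat.eqb_neq; lia).
  replace (Nat.ltb n n) with false by (symmetry; apply Nat.ltb_ge; lia).
  replace (Nat.leb n (ceil5 N)) with false by (symmetry; apply Nat.leb_gt; lia).
  rewrite !rpow_pos_eq by lra.
  unfold Rdiv. rewrite !Rinv_mult. rewrite I0, I1.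
  set (a := 1 - al).
  replace (- al - 1) with (a - 2) by (unfold a; ring).
  replace (- al - 2) with (a - 3) by (unfold a; ring).
  replace (Rpower (INR n) (- al)) with (Rpower (INR n) (a - 1)) by (f_equal; unfold a; ring).
  assert (TY := taylor3 a (INR n) ltac:(unfold a; lra) Hn).
  assert (EQ : (- Rpower (INR n) (a - 1) * (a * / Gamma (2 - al)) +
   Rpower (INR n) (a - 2) * (/ 2 * (a * - al * / Gamma (2 - al))) -
   Rpower (INR n) (a - 3) * (/ 6 * / Gamma (-1 - al)) -
   (Rpower (INR n - 1) a - Rpower (INR n) a) * / Gamma (2 - al)) = (- (/ Gamma (2 - al)) * (Rpower (INR n - 1) a - Rpower (INR n) a + a * Rpower (INR n) (a - 1) - a * (a - 1) / 2 * Rpower (INR n) (a - 2))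
        - / 6 * / Gamma (-1 - al) * Rpower (INR n) (a - 3))).
  { unfold a. generalize (Rpower (INR n) (1 - al - 1)) (Rpower (INR n) (1 - al - 2)) (Rpower (INR n) (1 - al - 3)) (Rpower (INR n - 1) (1 - al)) (Rpower (INR n) (1 - al)) (/ Gamma (2 - al)) (/ Gamma (-1 - al)). intros. field. }
  rewrite EQ.
  unfold Rminus at 1. eapply Rle_trans; [apply Rabs_triang|].
  rewrite Rabs_Ropp, !Rabs_mult, Rabs_Ropp.
  pose proof (Rpower_pos' (INR n) (a - 3)).
  rewrite (Rabs_pos_eq (Rpower _ _)) by lra.
  rewrite (Rabs_pos_eq (/ 6)) by lra.
  assert (Rabs (/ Gamma (2 - al)) * Rabs (Rpower (INR n - 1) a - Rpower (INR n) a + a * Rpower (INR n) (a - 1) - a * (a - 1) / 2 * Rpower (INR n) (a - 2))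
     <= Rabs (/ Gamma (2 - al)) * (3 * Rpower (INR n) (a - 3))) by (apply Rmult_le_compat_l; [apply Rabs_pos|exact TY]).
  pose proof (Rabs_pos (/ Gamma (-1 - al))). pose proof (Rabs_pos (/ Gamma (2 - al))).
  nra.
Qed.

Lemma inv_cube k : 2 <= k -> / k ^ 3 <= / (k - 1) ^ 2 - / k ^ 2.
Proof.
  intro Hk.
  assert (E : / (k - 1) ^ 2 - / k ^ 2 - / k ^ 3 = (k * k + k - 1) / (k ^ 3 * (k - 1) ^ 2)) by (field; lra).
  assert (0 <= (k * k + k - 1) / (k ^ 3 * (k - 1) ^ 2)).
  { apply Rmult_le_pos; [nra|]. left. apply Rinv_0_lt_compat. apply Rmult_lt_0_compat; apply pow_lt; lra. }
  lra.
Qed.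

Definition tel (K k : nat) : R := if Nat.ltb K k then / (INR k - 1) ^ 2 - / (INR k) ^ 2 else 0.

Lemma tel_sum K : (1 <= K)%nat -> forall m, sum_f_R0 (tel K) m = if Nat.leb K m then / (INR K) ^ 2 - / (INR m) ^ 2 else 0.
Proof.
  intros HK m. induction m.
  - simpl. unfold tel. replace (Nat.ltb K 0) with false by (symmetry; apply Nat.ltb_ge; lia).
    replace (Nat.leb K 0) with false by (symmetry; apply Nat.leb_gt; lia). reflexivity.
  - change (sum_f_R0 (tel K) (S m)) with (sum_f_R0 (tel K) m + tel K (S m)). rewrite IHm. unfold tel.
    destruct (Nat.leb K m) eqn:E.
    + apply Nat.leb_le in E.
      replace (Nat.ltb K (S m)) with true by (symmetry; apply Nat.ltb_lt; lia).
      replace (Nat.leb K (S m)) with true by (symmetry; apply Nat.leb_le; lia).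
      replace (INR (S m) - 1) with (INR m) by (rewrite S_INR; ring). ring.
    + apply Nat.leb_gt in E.
      replace (Nat.ltb K (S m)) with false by (symmetry; apply Nat.ltb_ge; lia).
      destruct (Nat.leb K (S m)) eqn:E2.
      * apply Nat.leb_le in E2. replace K with (S m) by lia. ring.
      * ring.
Qed.

Definition beta (K n k : nat) : R :=
  if Nat.eqb k n then (if Nat.ltb K n then / (INR n - 1) ^ 2 else 0) else tel K k.

Lemma beta_sum K n : (1 <= K)%nat -> (1 <= n)%nat -> sum_f_R0 (beta K n) n <= / (INR K) ^ 2.
Proof.
  intros HK Hn. destruct n as [|p]; [lia|].
  change (sum_f_R0 (beta K (S p)) (S p)) with (sum_f_R0 (beta K (S p)) p + beta K (S p) (S p)).
  rewrite (sum_eq _ (tel K)) by (intros i Hi; unfold beta; replace (Nat.eqb i (S p)) with false by (symmetry; apply Nat.eqb_neq; lia); reflexivity).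
  rewrite tel_sum by auto. unfold beta. rewrite Nat.eqb_refl.
  assert (HK0 : 0 < INR K) by (apply lt_0_INR; lia).
  assert (0 < / INR K ^ 2) by (apply Rinv_0_lt_compat; apply pow_lt; lra).
  destruct (Nat.leb K p) eqn:E.
  - apply Nat.leb_le in E. replace (Nat.ltb K (S p)) with true by (symmetry; apply Nat.ltb_lt; lia).
    replace (INR (S p) - 1) with (INR p) by (rewrite S_INR; ring). lra.
  - apply Nat.leb_gt in E. replace (Nat.ltb K (S p)) with false by (symmetry; apply Nat.ltb_ge; lia). lra.
Qed.

Lemma beta_nonneg K n k : (1 <= K)%nat -> 0 <= beta K n k.
Proof.
  intro HK. unfold beta, tel.
  destruct (Nat.eqb k n) eqn:E1.
  - destruct (Nat.ltb K n) eqn:E2; [|lra]. apply Nat.ltb_lt in E2.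
    left. apply Rinv_0_lt_compat. apply pow_lt.
    assert (2 <= INR n) by (replace 2 with (INR 2) by (simpl; ring); apply le_INR; lia). lra.
  - destruct (Nat.ltb K k) eqn:E2; [|lra]. apply Nat.ltb_lt in E2.
    assert (2 <= INR k) by (replace 2 with (INR 2) by (simpl; ring); apply le_INR; lia).
    pose proof (inv_cube (INR k) H). assert (0 < / INR k ^ 3) by (apply Rinv_0_lt_compat; apply pow_lt; lra). lra.
Qed.

Lemma scale_pow al k h p T : 0 < al -> 0 < h -> 0 < T / 5 <= k * h -> 0 < k ->
  / Rpower h al * Rpower k (- al - p) <= Rpower (T / 5) (- al) * Rpower k (- p).
Proof.
  intros Hal Hh HT Hk.
  rewrite <- Rpower_Ropp. replace (- al - p) with (- al + - p) by ring. rewrite Rpower_plus.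
  rewrite <- Rmult_assoc, Rpower_mult_distr by lra.
  apply Rmult_le_compat_r; [left; apply Rpower_pos'|]. apply Rpower_le_neg; nra.
Qed.

Lemma Rpower_neg_nat k (m : nat) : 0 < k -> Rpower k (- INR m) = / k ^ m.
Proof. intro Hk. rewrite Rpower_Ropp, Rpower_pow by lra. reflexivity. Qed.

Definition Cab al := 11 * Rabs (/ Gamma (2 - al)) + Rabs (/ Gamma (-2 - al)) + Rabs (/ Gamma (-1 - al)).

Lemma Cab_nonneg al : 0 <= Cab al.
Proof. unfold Cab. pose proof (Rabs_pos (/ Gamma (2 - al))). pose proof (Rabs_pos (/ Gamma (-2 - al))). pose proof (Rabs_pos (/ Gamma (-1 - al))). lra. Qed.

Lemma term_bound al N n k h T x M0 z : 0 < al < 1 -> (2 <= N)%nat -> 0 < h -> INR N * h = T ->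
  INR n * h = x -> 0 < x -> (k <= n)%nat -> Rabs z <= M0 ->
  Rabs (/ Rpower h al * (corr al N n k * z)) <= M0 * Cab al * Rpower (T / 5) (- al) * beta (ceil5 N) n k.
Proof.
  intros Hal HN Hh HT Hx Hx0 Hkn Hz.
  set (K := ceil5 N).
  pose proof (ceil5_ge N) as H5. fold K in H5.
  assert (HK : (1 <= K)%nat) by lia.
  assert (M0p : 0 <= M0) by (eapply Rle_trans; [apply Rabs_pos|exact Hz]).
  pose proof (Cab_nonneg al) as Cp. pose proof (beta_nonneg K n k HK) as Bp.
  pose proof (Rpower_pos' (T/5) (- al)) as Rp.
  assert (Hh' : 0 < / Rpower h al) by (apply Rinv_0_lt_compat; apply Rpower_pos').
  destruct (Compare_dec.le_lt_dec k K) as [HkK|HkK].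
  - rewrite corr_zero by auto. rewrite Rmult_0_l, Rmult_0_r, Rabs_R0.
    apply Rmult_le_pos; [apply Rmult_le_pos; [apply Rmult_le_pos|]|]; lra.
  - assert (Hk2 : 2 <= INR k) by (replace 2 with (INR 2) by (simpl; ring); apply le_INR; lia).
    assert (HNk : INR N <= 5 * INR k).
    { replace 5 with (INR 5) by (simpl; ring). rewrite <- mult_INR. apply le_INR. lia. }
    assert (HTk : 0 < T / 5 <= INR k * h).
    { rewrite <- HT. split; [apply Rmult_lt_0_compat; [apply Rmult_lt_0_compat; [apply lt_0_INR; lia|lra]|lra]|]. nra. }
    rewrite Rabs_mult, Rabs_mult, (Rabs_pos_eq (/ Rpower h al)) by lra.
    destruct (Nat.eq_dec k n) as [->|Hne].
    + unfold beta. rewrite Nat.eqb_refl. replace (Nat.ltb K n) with true by (symmetry; apply Nat.ltb_lt; lia).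
      assert (C := corr_last al N n Hal HkK ltac:(lia)).
      assert (S := scale_pow al (INR n) h 2 T ltac:(lra) Hh HTk ltac:(lra)).
      replace (Ropp 2) with (- INR 2) in S by (simpl; ring). rewrite Rpower_neg_nat in S by lra.
      assert (I2 : / INR n ^ 2 <= / (INR n - 1) ^ 2).
      { apply Rinv_le_contravar; [apply pow_lt; lra|]. apply pow_incr. lra. }
      assert (Cb : 3 * Rabs (/ Gamma (2 - al)) + Rabs (/ Gamma (-1 - al)) <= Cab al).
      { unfold Cab. pose proof (Rabs_pos (/ Gamma (2 - al))). pose proof (Rabs_pos (/ Gamma (-2 - al))). lra. }
      set (cb := 3 * Rabs (/ Gamma (2 - al)) + Rabs (/ Gamma (-1 - al))) in *.
      assert (cbp : 0 <= cb) by (unfold cb; pose proof (Rabs_pos (/ Gamma (2 - al))); pose proof (Rabs_pos (/ Gamma (-1 - al))); lra).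
      pose proof (Rpower_pos' (INR n) (- al - 2)).
      apply Rle_trans with (/ Rpower h al * (cb * Rpower (INR n) (- al - 2) * M0)).
      { apply Rmult_le_compat_l; [lra|]. apply Rmult_le_compat; try apply Rabs_pos; auto. }
      replace (/ Rpower h al * (cb * Rpower (INR n) (- al - 2) * M0)) with (cb * M0 * (/ Rpower h al * Rpower (INR n) (- al - 2))) by ring.
      apply Rle_trans with (cb * M0 * (Rpower (T / 5) (- al) * / INR n ^ 2)).
      { apply Rmult_le_compat_l; [nra|exact S]. }
      assert (0 <= / INR n ^ 2) by (left; apply Rinv_0_lt_compat; apply pow_lt; lra).
      apply Rle_trans with (Cab al * M0 * (Rpower (T / 5) (- al) * / (INR n - 1) ^ 2)).
      { apply Rmult_le_compat; try nra. }
      right. ring.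
    + unfold beta. replace (Nat.eqb k n) with false by (symmetry; apply Nat.eqb_neq; auto).
      unfold tel. replace (Nat.ltb K k) with true by (symmetry; apply Nat.ltb_lt; lia).
      assert (C := corr_mid al N n k Hal HkK ltac:(lia) ltac:(lia)).
      assert (S := scale_pow al (INR k) h 3 T ltac:(lra) Hh HTk ltac:(lra)).
      replace (Ropp 3) with (- INR 3) in S by (simpl; ring). rewrite Rpower_neg_nat in S by lra.
      assert (I2 := inv_cube (INR k) Hk2).
      assert (Ca : 8 * Rabs (/ Gamma (2 - al)) + Rabs (/ Gamma (-2 - al)) <= Cab al).
      { unfold Cab. pose proof (Rabs_pos (/ Gamma (2 - al))). pose proof (Rabs_pos (/ Gamma (-1 - al))). lra. }
      set (ca := 8 * Rabs (/ Gamma (2 - al)) + Rabs (/ Gamma (-2 - al))) in *.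
      assert (cap : 0 <= ca) by (unfold ca; pose proof (Rabs_pos (/ Gamma (2 - al))); pose proof (Rabs_pos (/ Gamma (-2 - al))); lra).
      pose proof (Rpower_pos' (INR k) (- al - 3)).
      apply Rle_trans with (/ Rpower h al * (ca * Rpower (INR k) (- al - 3) * M0)).
      { apply Rmult_le_compat_l; [lra|]. apply Rmult_le_compat; try apply Rabs_pos; auto. }
      replace (/ Rpower h al * (ca * Rpower (INR k) (- al - 3) * M0)) with (ca * M0 * (/ Rpower h al * Rpower (INR k) (- al - 3))) by ring.
      apply Rle_trans with (ca * M0 * (Rpower (T / 5) (- al) * / INR k ^ 3)).
      { apply Rmult_le_compat_l; [nra|exact S]. }
      assert (0 <= / INR k ^ 3) by (left; apply Rinv_0_lt_compat; apply pow_lt; lra).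
      apply Rle_trans with (Cab al * M0 * (Rpower (T / 5) (- al) * (/ (INR k - 1) ^ 2 - / INR k ^ 2))).
      { apply Rmult_le_compat; try nra. }
      right. ring.
Qed.

Theorem mainTheorem10 (alpha T x : R) (y y1 y2 : R -> R)
  (Halpha : 0 < alpha < 1) (HT : 0 < T) (Hx : 0 < x <= T)
  (Hy1 : forall t, 0 <= t <= T -> derivable_pt_lim y t (y1 t))
  (Hy2 : forall t, 0 <= t <= T -> derivable_pt_lim y1 t (y2 t))
  (Hy2c : forall t, 0 <= t <= T -> continuity_pt y2 t) :
  exists D, is_caputo y1 alpha x D /\
  exists C h0, 0 < h0 /\
    forall (N n : nat), (2 <= N)%nat ->
      let h := T / INR N in
      INR n * h = x -> h < h0 ->
      Rabs (/ rpow h alpha *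
              sum_f_R0 (fun k => sigma_bar alpha N n k * y (INR (n - k) * h)) n
            - D)
      <= C * rpow h (2 - alpha).
Proof.
  destruct (continuity_ab_maj (fun t => Rabs (y2 t)) 0 T ltac:(lra)) as [m2 [Hm2 Hm2']].
  { intros c Hc. apply (continuity_pt_comp y2 Rabs c (Hy2c c Hc)). apply Rcontinuity_abs. }
  set (M2 := Rabs (y2 m2)).
  destruct (continuity_ab_maj (fun t => Rabs (y t)) 0 T ltac:(lra)) as [m0 [Hm0 Hm0']].
  { intros c Hc. apply (continuity_pt_comp y Rabs c). apply derivable_continuous_pt. exists (y1 c). apply Hy1. auto.
    apply Rcontinuity_abs. }
  set (M0 := Rabs (y m0)).
  assert (HH : Hyp alpha x M2 y y1 y2).
  { unfold Hyp. split; [lra|]. split; [lra|]. split; [|split].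
    - intros t Ht. apply is_derive_Reals. apply Hy1. lra.
    - intros t Ht. apply is_derive_Reals. apply Hy2. lra.
    - intros t Ht. apply Hm2. lra. }
  exists (Ival alpha x y1 / Gamma (1 - alpha)). split.
  { exists (Ival alpha x y1). split; [apply (improper _ _ _ _ _ _ HH)|reflexivity]. }
  exists (Rabs (/ Gamma (1 - alpha)) * M2 * (2 + / (1 - alpha)) + M0 * Cab alpha * Rpower (T / 5) (- alpha) * 25 / T ^ 2 * Rpower T alpha).
  exists T. split; [lra|].
  intros N n HN h Hnx Hh0.
  assert (HN0 : 0 < INR N) by (apply lt_0_INR; lia).
  assert (Hh : 0 < h) by (unfold h; apply Rdiv_lt_0_compat; lra).
  assert (HNh : INR N * h = T) by (unfold h; field; lra).
  assert (Hn : (1 <= n)%nat).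
  { destruct n; [simpl in Hnx; lra|lia]. }
  rewrite !rpow_pos_eq by lra.
  destruct (inv_rels alpha Halpha) as [I1 I0].
  set (z := fun k => y (INR (n - k) * h)).
  change (fun k => sigma_bar alpha N n k * y (INR (n - k) * h)) with (fun k => sigma_bar alpha N n k * z k).
  assert (Hz : forall k, (k <= n)%nat -> Rabs (z k) <= M0).
  { intros k Hk. apply Hm0. unfold z. split.
    - apply Rmult_le_pos; [apply pos_INR|lra].
    - assert (INR (n - k) <= INR n) by (apply le_INR; lia). nra. }
  rewrite (sum_eq _ (fun k => lw (1 - alpha) n k * z k * / Gamma (2 - alpha) + corr alpha N n k * z k))
    by (intros i Hi; unfold corr; unfold Rdiv; ring).
  rewrite plus_sum, <- scal_sum.
  assert (EF := Fj_sum y alpha x h n Halpha Hh Hn Hnx).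
  fold z in EF.
  set (SL := sum_f_R0 (fun k => lw (1 - alpha) n k * z k) n) in *.
  set (SC := sum_f_R0 (fun k => corr alpha N n k * z k) n).
  assert (Ep : / Rpower h alpha = Rpower h (- alpha)) by (rewrite Rpower_Ropp; reflexivity).
  assert (E1 : / Rpower h alpha * (/ Gamma (2 - alpha) * SL) = sm (Fj y alpha x h) n * / Gamma (1 - alpha)).
  { change (sum_f_R0 (fun k : nat => lw (1 - alpha) n k * y (INR (n - k) * h)) n) with SL in EF.
    rewrite EF, I1, Ep.
    transitivity (Rpower h (-alpha) * (/(1-alpha) * (1-alpha)) * (/ Gamma (2-alpha) * SL)).
    - rewrite Rinv_l by lra. ring.
    - unfold Rdiv. ring. }
  replace (/ Rpower h alpha * (/ Gamma (2 - alpha) * SL + SC) - Ival alpha x y1 / Gamma (1 - alpha))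
    with ((sm (Fj y alpha x h) n - Ival alpha x y1) * / Gamma (1 - alpha) + / Rpower h alpha * SC)
    by (unfold Rdiv; rewrite Rmult_plus_distr_l, E1; ring).
  eapply Rle_trans; [apply Rabs_triang|].
  assert (B1 := L1err _ _ _ _ _ _ HH n h Hn Hh Hnx).
  assert (B1' : Rabs ((sm (Fj y alpha x h) n - Ival alpha x y1) * / Gamma (1 - alpha))
     <= Rabs (/ Gamma (1 - alpha)) * M2 * (2 + / (1 - alpha)) * Rpower h (2 - alpha)).
  { rewrite Rabs_mult, Rmult_comm. rewrite !Rmult_assoc. apply Rmult_le_compat_l; [apply Rabs_pos|].
    rewrite <- !Rmult_assoc. exact B1. }
  set (K := ceil5 N).
  pose proof (ceil5_ge N) as H5. fold K in H5.
  assert (HK : (1 <= K)%nat) by lia.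
  assert (HKr : 0 < INR K) by (apply lt_0_INR; lia).
  assert (B2 : Rabs (/ Rpower h alpha * SC) <= M0 * Cab alpha * Rpower (T / 5) (- alpha) * / (INR K) ^ 2).
  { unfold SC. rewrite scal_sum.
    eapply Rle_trans; [apply Rsum_abs|].
    eapply Rle_trans.
    { apply (sum_Rle _ (fun k => M0 * Cab alpha * Rpower (T / 5) (- alpha) * beta K n k)).
      intros k Hk. rewrite Rmult_comm. apply term_bound with (x := x); auto; lra. }
    replace (sum_f_R0 (fun k => M0 * Cab alpha * Rpower (T / 5) (- alpha) * beta K n k) n)
      with (M0 * Cab alpha * Rpower (T / 5) (- alpha) * sum_f_R0 (beta K n) n)
      by (rewrite scal_sum; apply sum_eq; intros; ring).
    apply Rmult_le_compat_l.
    - assert (0 <= M0) by (unfold M0; apply Rabs_pos). pose proof (Cab_nonneg alpha). pose proof (Rpower_pos' (T/5) (- alpha)).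
      apply Rmult_le_pos; [apply Rmult_le_pos|]; lra.
    - apply beta_sum; auto. }
  assert (B3 : / (INR K) ^ 2 <= 25 / T ^ 2 * (h * h)).
  { assert (INR N <= 5 * INR K) by (replace 5 with (INR 5) by (simpl; ring); rewrite <- mult_INR; apply le_INR; lia).
    rewrite <- HNh.
    replace (25 / (INR N * h) ^ 2 * (h * h)) with (/ (INR N / 5) ^ 2) by (field; lra).
    apply Rinv_le_contravar; [apply pow_lt; lra|]. apply pow_incr. lra. }
  assert (B4 : h * h <= Rpower T alpha * Rpower h (2 - alpha)).
  { replace (h * h) with (Rpower h alpha * Rpower h (2 - alpha)).
    - apply Rmult_le_compat_r; [left; apply Rpower_pos'|]. apply Rle_Rpower_l; [lra|]. split; [lra|].
      unfold h. apply (Rmult_le_reg_r (INR N)); [lra|]. unfold Rdiv. rewrite Rmult_assoc, Rinv_l by lra.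
      assert (1 <= INR N) by (replace 1 with (INR 1) by (simpl; ring); apply le_INR; lia). nra.
    - rewrite <- Rpower_plus. replace (alpha + (2 - alpha)) with (INR 2) by (simpl; ring).
      rewrite Rpower_pow by lra. simpl. ring. }
  assert (0 <= M0) by (unfold M0; apply Rabs_pos). pose proof (Cab_nonneg alpha). pose proof (Rpower_pos' (T/5) (- alpha)).
  assert (P1 : 0 <= M0 * Cab alpha * Rpower (T / 5) (- alpha)) by (apply Rmult_le_pos; [apply Rmult_le_pos|]; lra).
  assert (P2 : 0 <= 25 / T ^ 2) by (apply Rmult_le_pos; [lra|left; apply Rinv_0_lt_compat; apply pow_lt; lra]).
  assert (B5 : M0 * Cab alpha * Rpower (T / 5) (- alpha) * / (INR K) ^ 2 <=
               M0 * Cab alpha * Rpower (T / 5) (- alpha) * 25 / T ^ 2 * Rpower T alpha * Rpower h (2 - alpha)).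
  { apply Rle_trans with (M0 * Cab alpha * Rpower (T / 5) (- alpha) * (25 / T ^ 2 * (Rpower T alpha * Rpower h (2 - alpha)))).
    - apply Rmult_le_compat_l; [lra|]. eapply Rle_trans; [exact B3|]. apply Rmult_le_compat_l; lra.
    - right. unfold Rdiv. ring. }
  lra.
Qed.
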